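(* Let $m\ge2$, let $\mathcal H_1,\dots,\mathcal H_m$ be real Hilbert spaces, $\boldsymbol{\mathcal H}=\mathcal H_1\oplus\cdots\oplus\mathcal H_m$, and let $\boldsymbol C\subset\boldsymbol{\mathcal H}$ be nonempty closed convex. For every $i$ let $\boldsymbol g_i:\boldsymbol{\mathcal H}\to\left]-\infty,+\infty\right]$ be such that for every $(x_1,\dots,x_m)$ the function $x\mapsto\boldsymbol g_i(x_1,\dots,x_{i-1},x,x_{i+1},\dots,x_m)$ is real-valued and differentiable on $\mathcal H_i$, with gradient $\nabla_i\boldsymbol g_i(x_1,\dots,x_m)$ at $x_i$, and assume $\sum_i\langle\nabla_i\boldsymbol g_i(\boldsymbol x)-\nabla_i\boldsymbol g_i(\boldsymbol y),x_i-y_i\rangle\ge0$ for all $\boldsymbol x,\boldsymbol y\in\boldsymbol{\mathcal H}$. For $i\in\{1,\dots,m\}$ and $(x_1,\dots,x_m)\in\boldsymbol{\mathcal H}$ set $\boldsymbol Q_i(x_1,\dots,x_{i-1},x_{i+1},\dots,x_m)=\{x\in\mathcal H_i:(x_1,\dots,x_{i-1},x,x_{i+1},\dots,x_m)\in\boldsymbol C\}$. Suppose there exists $(z_1,\dots,z_m)\in\boldsymbol{\mathcal H}$ with $-\big(\nabla_1\boldsymbol g_1(z_1,\dots,z_m),\dots,\nabla_m\boldsymbol g_m(z_1,\dots,z_m)\big)\in N_{\boldsymbol C}(z_1,\dots,z_m)$, and $\chi\in]0,+\infty[$ with $\sum_i\|\nabla_i\boldsymbol g_i(\boldsymbol x)-\nabla_i\boldsymbol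 g_i(\boldsymbol y)\|^2\le\chi^2\sum_i\|x_i-y_i\|^2$ for all $\boldsymbol x,\boldsymbol y$. Let $\varepsilon\in]0,1/(\chi+1)[$, $(\gamma_n)_n$ a sequence in $[\varepsilon,(1-\varepsilon)/\chi]$, $x_{i,0}\in\mathcal H_i$, and $(a_{i,n})_n,(b_{i,n})_n,(c_{i,n})_n$ absolutely summable sequences in $\mathcal H_i$. For every $n$ define $y_{i,n}=x_{i,n}-\gamma_n(\nabla_i\boldsymbol g_i(x_{1,n},\dots,x_{m,n})+a_{i,n})$, $(p_{1,n},\dots,p_{m,n})=P_{\boldsymbol C}(y_{1,n},\dots,y_{m,n})+(b_{1,n},\dots,b_{m,n})$, $q_{i,n}=p_{i,n}-\gamma_n(\nabla_i\boldsymbol g_i(p_{1,n},\dots,p_{m,n})+c_{i,n})$, $x_{i,n+1}=x_{i,n}-y_{i,n}+q_{i,n}$. Then there exists $(\overline x_1,\dots,\overline x_m)$ such that for every $i$, $\overline x_i\in\operatorname{Argmin}_{x\in\boldsymbol Q_i(\overline x_1,\dots,\overline x_{i-1},\overline x_{i+1},\dots,\overline x_m)}\boldsymbol g_i(\overline x_1,\dots,\overline x_{i-1},x,\overline x_{i+1},\dots,\overline x_m)$ (a generalized Nash equilibrium), and $x_{i,n}\rightharpoonup\overline x_i$, $p_{i,n}\rightharpoonup\overline x_i$.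
   Context: $\boldsymbol{\mathcal H}$ carries the inner product $\sum_i\langle x_i,y_i\rangle$. $P_{\boldsymbol C}$ is the metric projection onto $\boldsymbol C$ and $N_{\boldsymbol C}$ its normal cone: $N_{\boldsymbol C}\boldsymbol x=\{\boldsymbol u:\langle\langle\boldsymbol y-\boldsymbol x,\boldsymbol u\rangle\rangle\le0\ \forall\boldsymbol y\in\boldsymbol C\}$ if $\boldsymbol x\in\boldsymbol C$, empty otherwise. $\rightharpoonup$ denotes weak convergence. *)

(* Defs.v *)
From Stdlib Require Import Reals Lra Arith.
Open Scope R_scope.

Record Hilbert := {
  carrier :> Type;
  hzero : carrier;
  hadd : carrier -> carrier -> carrier;
  hopp : carrier -> carrier;
  hscal : R -> carrier -> carrier;
  hinner : carrier -> carrier -> R;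
  hadd_assoc : forall x y z, hadd x (hadd y z) = hadd (hadd x y) z;
  hadd_comm : forall x y, hadd x y = hadd y x;
  hadd_0l : forall x, hadd hzero x = x;
  hadd_oppl : forall x, hadd (hopp x) x = hzero;
  hscal_assoc : forall a b x, hscal a (hscal b x) = hscal (a * b) x;
  hscal_1 : forall x, hscal 1 x = x;
  hscal_addr : forall a x y, hscal a (hadd x y) = hadd (hscal a x) (hscal a y);
  hscal_addl : forall a b x, hscal (a + b) x = hadd (hscal a x) (hscal b x);
  hinner_sym : forall x y, hinner x y = hinner y x;
  hinner_addl : forall x y z, hinner (hadd x y) z = hinner x z + hinner y z;
  hinner_scall : forall a x y, hinner (hscal a x) y = a * hinner x y;
  hinner_pos : forall x, 0 <= hinner x x;
  hinner_def : forall x, hinner x x = 0 -> x = hzero;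
  hcomplete : forall u : nat -> carrier,
    (forall eps, eps > 0 -> exists N, forall p q, (p >= N)%nat -> (q >= N)%nat ->
        sqrt (hinner (hadd (u p) (hopp (u q))) (hadd (u p) (hopp (u q)))) < eps) ->
    exists l, forall eps, eps > 0 -> exists N, forall n, (n >= N)%nat ->
        sqrt (hinner (hadd (u n) (hopp l)) (hadd (u n) (hopp l))) < eps
}.

Arguments hzero {h}.
Arguments hadd {h} _ _.
Arguments hopp {h} _.
Arguments hscal {h} _ _.
Arguments hinner {h} _ _.

Definition hsub {H : Hilbert} (x y : H) : H := hadd x (hopp y).
Definition hnorm {H : Hilbert} (x : H) : R := sqrt (hinner x x).

Definition weak_cv {H : Hilbert} (u : nat -> H) (l : H) : Prop :=
  forall v : H, Un_cv (fun n => hinner (u n) v) (hinner l v).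

Definition abs_summable {H : Hilbert} (u : nat -> H) : Prop :=
  exists S, Un_cv (fun N => sum_f_R0 (fun n => hnorm (u n)) N) S.

(** * Finite direct sums H_1 ⊕ ... ⊕ H_m, indices {0,...,m-1} *)
Definition idx (m : nat) := {k : nat | (k < m)%nat}.

Definition idx_eq_dec (m : nat) (i j : idx m) : {i = j} + {i <> j}.
Proof.
  destruct i as [i hi], j as [j hj].
  destruct (Nat.eq_dec i j) as [e|n].
  - left. subst j. f_equal. apply Peano_dec.le_unique.
  - right. intros E. apply n. inversion E. reflexivity.
Defined.

Fixpoint sum_lt (n : nat) (g : nat -> R) : R :=
  match n with O => 0 | S n' => sum_lt n' g + g n' end.

Definition sumI (m : nat) (f : idx m -> R) : R :=
  sum_lt m (fun k => match lt_dec k m with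
                     | left h => f (exist _ k h)
                     | right _ => 0 end).

Section Prod.
Context {m : nat} {H : idx m -> Hilbert}.
Definition PH := forall i : idx m, H i.
Definition padd (x y : PH) : PH := fun i => hadd (x i) (y i).
Definition psub (x y : PH) : PH := fun i => hsub (x i) (y i).
Definition pscal (a : R) (x : PH) : PH := fun i => hscal a (x i).
Definition popp (x : PH) : PH := fun i => hopp (x i).
Definition pinner (x y : PH) : R := sumI m (fun i => hinner (x i) (y i)).
Definition pnorm (x : PH) : R := sqrt (pinner x x).

Definition upd (x : PH) (i : idx m) (y : H i) : PH :=
  fun j => match idx_eq_dec m i j with
           | left e => eq_rect i (fun k => H k) y j e
           | right _ => x j end.

Definition nonempty (C : PH -> Prop) : Prop := exists x, C x.
Definition closed (C : PH -> Prop) : Prop :=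
  forall (u : nat -> PH) (l : PH), (forall n, C (u n)) ->
    Un_cv (fun n => pnorm (psub (u n) l)) 0 -> C l.
Definition convex (C : PH -> Prop) : Prop :=
  forall x y t, C x -> C y -> 0 <= t <= 1 ->
    C (padd (pscal (1 - t) x) (pscal t y)).

Definition is_proj (C : PH -> Prop) (P : PH -> PH) : Prop :=
  forall y, C (P y) /\ forall c, C c -> pnorm (psub y (P y)) <= pnorm (psub y c).

Definition normal_cone (C : PH -> Prop) (x u : PH) : Prop :=
  C x /\ forall y, C y -> pinner (psub y x) u <= 0.

Definition Qset (C : PH -> Prop) (i : idx m) (x : PH) (y : H i) : Prop :=
  C (upd x i y).
End Prod.
Arguments PH {m} H.

(* Main.v *)
Require Import Defs.
From Stdlib Require Import Reals.
From Stdlib Require Import Lra Lia Psatz Classical ClassicalEpsilon FunctionalExtensionality ProofIrrelevance Eqdep_dec Arith ZArith.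
Open Scope R_scope.

Section HT.
Variable X : Hilbert.
Implicit Types x y z u v w : X.

Lemma hadd_0r x : hadd x hzero = x.
Proof. rewrite hadd_comm; apply hadd_0l. Qed.
Lemma hadd_oppr x : hadd x (hopp x) = hzero.
Proof. rewrite hadd_comm; apply hadd_oppl. Qed.
Lemma hinner_addr x y z : hinner x (hadd y z) = hinner x y + hinner x z.
Proof. rewrite !(hinner_sym _ x); apply hinner_addl. Qed.
Lemma hinner_scalr a x y : hinner x (hscal a y) = a * hinner x y.
Proof. rewrite !(hinner_sym _ x); apply hinner_scall. Qed.
Lemma hinner_0l y : hinner (@hzero X) y = 0.
Proof.
  assert (E := hinner_addl X hzero hzero y). rewrite hadd_0l in E. lra.
Qed.
Lemma hinner_0r y : hinner y (@hzero X) = 0.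
Proof. rewrite hinner_sym; apply hinner_0l. Qed.
Lemma hinner_oppl x y : hinner (hopp x) y = - hinner x y.
Proof.
  assert (E := hinner_addl X (hopp x) x y). rewrite hadd_oppl, hinner_0l in E. lra.
Qed.
Lemma hinner_oppr x y : hinner x (hopp y) = - hinner x y.
Proof. rewrite !(hinner_sym _ x); apply hinner_oppl. Qed.

Lemma hext u v : (forall t, hinner u t = hinner v t) -> u = v.
Proof.
  intros E. assert (hinner (hadd u (hopp v)) (hadd u (hopp v)) = 0).
  { rewrite hinner_addl, hinner_oppl, !E. lra. }
  apply hinner_def in H.
  rewrite <- (hadd_0l X v), <- H, <- hadd_assoc, hadd_oppl, hadd_0r. reflexivity.
Qed.

End HT.

Ltac hexp := unfold hsub in *;
  repeat (rewrite ?hinner_addl, ?hinner_addr, ?hinner_scall, ?hinner_scalr,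
     ?hinner_oppl, ?hinner_oppr, ?hinner_0l, ?hinner_0r).

Section HT2.
Variable X : Hilbert.
Implicit Types x y z u v w : X.

Definition nsq x := hinner x x.

Lemma hnorm_nonneg x : 0 <= hnorm x.
Proof. unfold hnorm; apply sqrt_pos. Qed.
Lemma hnorm_sq x : hnorm x * hnorm x = hinner x x.
Proof. unfold hnorm; apply sqrt_sqrt, hinner_pos. Qed.
Lemma hnorm_sq2 x : hnorm x ^ 2 = hinner x x.
Proof. rewrite <- hnorm_sq; ring. Qed.

Lemma CS_sq x y : hinner x y * hinner x y <= hinner x x * hinner y y.
Proof.
  destruct (Req_dec (hinner y y) 0) as [E|E].
  - apply hinner_def in E. subst y. rewrite !hinner_0r. nra.
  - assert (Py := hinner_pos X y).
    set (t := - hinner x y / hinner y y).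
    assert (P := hinner_pos X (hadd x (hscal t y))).
    revert P; hexp; intro P. rewrite (hinner_sym _ y x) in P.
    assert (E2: 0 <= hinner x x - hinner x y * hinner x y / hinner y y). { replace (hinner x x - hinner x y * hinner x y / hinner y y) with (hinner x x + t * hinner x y + (t * hinner x y + t * (t * hinner y y))) by (unfold t; field; auto). exact P. }


    assert (0 <= hinner x x * hinner y y - hinner x y * hinner x y).
    { assert (0 < hinner y y) by lra.
      replace (hinner x x * hinner y y - hinner x y * hinner x y) with
        ((hinner x x - hinner x y * hinner x y / hinner y y) * hinner y y) by (field; lra).
      apply Rmult_le_pos; lra. }
    lra.
Qed.

Lemma CS x y : Rabs (hinner x y) <= hnorm x * hnorm y.
Proof.
  apply Rsqr_incr_0_var.
  - rewrite <- Rsqr_abs. unfold Rsqr. replace (hnorm x * hnorm y * (hnorm x * hnorm y))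
     with ((hnorm x * hnorm x) * (hnorm y * hnorm y)) by ring. rewrite !hnorm_sq. apply CS_sq.
  - apply Rmult_le_pos; apply hnorm_nonneg.
Qed.
Lemma CS1 x y : hinner x y <= hnorm x * hnorm y.
Proof. eapply Rle_trans; [apply Rle_abs|apply CS]. Qed.
Lemma CS2 x y : - (hnorm x * hnorm y) <= hinner x y.
Proof. assert (H := CS x y). assert (H2 := Rabs_Ropp (hinner x y)). assert (H3 := Rle_abs (- hinner x y)). lra. Qed.

Lemma hnorm_le_sq a b : 0 <= b -> a * a <= b * b -> a <= b.
Proof. intros. destruct (Rle_dec a b); auto. nra. Qed.

Lemma hnorm_le_of x r : 0 <= r -> hinner x x <= r * r -> hnorm x <= r.
Proof. intros. apply hnorm_le_sq; auto. rewrite hnorm_sq; auto. Qed.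

Lemma tri x y : hnorm (hadd x y) <= hnorm x + hnorm y.
Proof.
  apply hnorm_le_of. { assert (H1:=hnorm_nonneg x); assert (H2:=hnorm_nonneg y); lra. }
  hexp. rewrite (hinner_sym _ y x).
  assert (H:= CS1 x y). rewrite <- (hnorm_sq x), <- (hnorm_sq y). nra.
Qed.

Lemma tri_sub x y z : hnorm (hsub x z) <= hnorm (hsub x y) + hnorm (hsub y z).
Proof.
  replace (hsub x z) with (hadd (hsub x y) (hsub y z)). apply tri.
  apply hext; intro t. hexp. ring.
Qed.

Lemma hnorm_opp x : hnorm (hopp x) = hnorm x.
Proof. unfold hnorm. f_equal. hexp. ring. Qed.

Lemma hnorm_scal a x : hnorm (hscal a x) = Rabs a * hnorm x.
Proof.
  unfold hnorm. hexp. replace (a * (a * hinner x x)) with (Rsqr (Rabs a) * hinner x x).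
  rewrite sqrt_mult. rewrite sqrt_Rsqr; auto. apply Rabs_pos. apply Rle_0_sqr. apply hinner_pos.
  rewrite <- Rsqr_abs. unfold Rsqr; ring.
Qed.

Lemma hnorm_sub_sym x y : hnorm (hsub x y) = hnorm (hsub y x).
Proof. unfold hnorm; f_equal. hexp. ring. Qed.

Lemma hnorm_zero : hnorm (@hzero X) = 0.
Proof. unfold hnorm. rewrite hinner_0l. apply sqrt_0. Qed.

Lemma hnorm0_eq x : hnorm x = 0 -> x = hzero.
Proof. intros. apply hinner_def. rewrite <- hnorm_sq, H. ring. Qed.

Lemma hsub_diag x : hsub x x = hzero.
Proof. unfold hsub; apply hadd_oppr. Qed.

Lemma hnorm_rev_tri x y : hnorm x - hnorm y <= hnorm (hsub x y).
Proof.
  assert (H := tri_sub x y hzero).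
  replace (hsub x hzero) with x in H. replace (hsub y hzero) with y in H. lra.
  all: apply hext; intro; hexp; ring.
Qed.

End HT2.


Lemma sum_lt_ext n f g : (forall k, (k < n)%nat -> f k = g k) -> sum_lt n f = sum_lt n g.
Proof. induction n; simpl; intros; auto. rewrite IHn, H; auto. Qed.
Lemma sum_lt_plus n f g : sum_lt n (fun k => f k + g k) = sum_lt n f + sum_lt n g.
Proof. induction n; simpl; [ring|rewrite IHn; ring]. Qed.
Lemma sum_lt_scal n a f : sum_lt n (fun k => a * f k) = a * sum_lt n f.
Proof. induction n; simpl; [ring|rewrite IHn; ring]. Qed.
Lemma sum_lt_le n f g : (forall k, (k < n)%nat -> f k <= g k) -> sum_lt n f <= sum_lt n g.
Proof. induction n; simpl; intros; [lra|]. assert (f n <= g n) by auto. assert (sum_lt n f <= sum_lt n g) by auto. lra. Qed.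
Lemma sum_lt_nonneg n f : (forall k, (k < n)%nat -> 0 <= f k) -> 0 <= sum_lt n f.
Proof. intros. replace 0 with (sum_lt n (fun _ => 0)). apply sum_lt_le; auto. induction n; simpl; auto. rewrite IHn; [ring|]. intros; auto. Qed.
Lemma sum_lt_term_le n f k : (forall k, (k < n)%nat -> 0 <= f k) -> (k < n)%nat -> f k <= sum_lt n f.
Proof.
  induction n; simpl; intros; [lia|].
  assert (0 <= sum_lt n f) by (apply sum_lt_nonneg; auto).
  destruct (Nat.eq_dec k n). subst; lra.
  assert (f k <= sum_lt n f) by (apply IHn; auto; lia). assert (0 <= f n) by auto. lra.
Qed.
Lemma sum_lt_const n c : sum_lt n (fun _ => c) = INR n * c.
Proof. induction n; simpl sum_lt; [simpl; ring|rewrite IHn, S_INR; ring]. Qed.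

Section SumI.
Variable m : nat.
Definition GI (f : idx m -> R) k := match lt_dec k m with left h => f (exist _ k h) | right _ => 0 end.

Lemma sumI_ext f g : (forall i, f i = g i) -> sumI m f = sumI m g.
Proof. intros. unfold sumI. apply sum_lt_ext; intros. destruct (lt_dec k m); auto. Qed.
Lemma sumI_plus f g : sumI m (fun i => f i + g i) = sumI m f + sumI m g.
Proof. unfold sumI. rewrite <- sum_lt_plus. apply sum_lt_ext; intros. destruct (lt_dec k m); auto; ring. Qed.
Lemma sumI_scal a f : sumI m (fun i => a * f i) = a * sumI m f.
Proof. unfold sumI. rewrite <- sum_lt_scal. apply sum_lt_ext; intros. destruct (lt_dec k m); auto; ring. Qed.
Lemma sumI_le f g : (forall i, f i <= g i) -> sumI m f <= sumI m g.
Proof. intros; unfold sumI. apply sum_lt_le; intros. destruct (lt_dec k m); auto; lra. Qed.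
Lemma sumI_nonneg f : (forall i, 0 <= f i) -> 0 <= sumI m f.
Proof. intros; unfold sumI. apply sum_lt_nonneg; intros. destruct (lt_dec k m); auto; lra. Qed.
Lemma sumI_term_le f i : (forall i, 0 <= f i) -> f i <= sumI m f.
Proof.
  intros. unfold sumI. destruct i as [k hk].
  replace (f (exist _ k hk)) with (GI f k).
  apply sum_lt_term_le; auto. intros. unfold GI; destruct (lt_dec k0 m); auto; lra.
  unfold GI. destruct (lt_dec k m); [|lia]. f_equal. f_equal. apply Peano_dec.le_unique.
Qed.
Lemma sumI_const c : sumI m (fun _ => c) = INR m * c.
Proof.
  unfold sumI. rewrite <- sum_lt_const. apply sum_lt_ext. intros. destruct (lt_dec k m); auto; lia.
Qed.
Lemma sumI_single f i : (forall j, j <> i -> f j = 0) -> sumI m f = f i.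
Proof.
  intros. unfold sumI. destruct i as [k hk].
  assert (forall n, sum_lt n (GI f) = if lt_dec k n then f (exist _ k hk) else 0).
  { induction n.
    - simpl. destruct (lt_dec k 0); [lia|auto].
    - simpl sum_lt. rewrite IHn. unfold GI.
      destruct (lt_dec k n), (lt_dec k (S n)), (lt_dec n m); try lia.
      + rewrite (H (exist _ n l1)). ring. intro E. inversion E. lia.
      + ring.
      + assert (n = k) by lia. subst n. replace l0 with hk by apply Peano_dec.le_unique. ring.
      + rewrite (H (exist _ n l)). ring. intro E. inversion E. lia. }
  rewrite H0. destruct (lt_dec k m); [|lia]. auto.
Qed.
Lemma sumI_zero f : (forall i, 0 <= f i) -> sumI m f = 0 -> forall i, f i = 0.
Proof. intros. assert (f i <= sumI m f) by (apply sumI_term_le; auto). assert (0 <= f i) by auto. lra. Qed.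

Lemma finite_N (P : idx m -> nat -> Prop) :
  (forall i, exists N, forall n, (n >= N)%nat -> P i n) ->
  exists N, forall i n, (n >= N)%nat -> P i n.
Proof.
  intros HP.
  assert (forall k, exists N, forall i n, (proj1_sig i < k)%nat -> (n >= N)%nat -> P i n).
  { induction k.
    - exists O. intros. lia.
    - destruct IHk as [N1 HN1]. destruct (lt_dec k m) as [h|h].
      + destruct (HP (exist _ k h)) as [N2 HN2]. exists (max N1 N2). intros [j hj] n Hj Hn.
        simpl in Hj. destruct (Nat.eq_dec j k).
        * subst. replace hj with h by apply Peano_dec.le_unique. apply HN2. lia.
        * apply HN1; simpl; lia.
      + exists N1. intros [j hj] n Hj Hn. apply HN1; simpl; auto; lia. }
  destruct (H m) as [N HN]. exists N. intros. apply HN; auto. destruct i; simpl; auto.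
Qed.
End SumI.

Section Prod.
Variable m : nat.
Variable H : idx m -> Hilbert.

Lemma PX_complete : forall u : nat -> PH H,
    (forall eps, eps > 0 -> exists N, forall p q, (p >= N)%nat -> (q >= N)%nat ->
        sqrt (pinner (padd (u p) (popp (u q))) (padd (u p) (popp (u q)))) < eps) ->
    exists l, forall eps, eps > 0 -> exists N, forall n, (n >= N)%nat ->
        sqrt (pinner (padd (u n) (popp l)) (padd (u n) (popp l))) < eps.
Proof.
  intros u Hc.
  assert (Hci : forall i : idx m, forall eps, eps > 0 -> exists N, forall p q, (p >= N)%nat -> (q >= N)%nat ->
        sqrt (hinner (hadd (u p i) (hopp (u q i))) (hadd (u p i) (hopp (u q i)))) < eps).
  { intros i eps He. destruct (Hc eps He) as [N HN]. exists N. intros.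
    eapply Rle_lt_trans; [|apply (HN p q); auto]. apply sqrt_le_1_alt.
    unfold pinner. apply (sumI_term_le m (fun i => hinner (padd (u p) (popp (u q)) i) (padd (u p) (popp (u q)) i))).
    intros; apply hinner_pos. }
  assert (HL : forall i, {l : H i | forall eps, eps > 0 -> exists N, forall n, (n >= N)%nat ->
        sqrt (hinner (hadd (u n i) (hopp l)) (hadd (u n i) (hopp l))) < eps}).
  { intros i. apply constructive_indefinite_description. apply (hcomplete (H i) (fun n => u n i)). apply Hci. }
  exists (fun i => proj1_sig (HL i)). intros eps He.
  set (eta := eps / (INR m + 1)).
  assert (Hm0 : 0 <= INR m) by apply pos_INR.
  assert (Heta : eta > 0) by (unfold eta; apply Rdiv_lt_0_compat; lra).
  destruct (finite_N m (fun i n => sqrt (hinner (hadd (u n i) (hopp (proj1_sig (HL i)))) (hadd (u n i) (hopp (proj1_sig (HL i))))) < eta)) as [N HN].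
  { intros i. apply (proj2_sig (HL i)). auto. }
  exists N. intros n Hn.
  assert (Hle : pinner (padd (u n) (popp (fun i => proj1_sig (HL i)))) (padd (u n) (popp (fun i => proj1_sig (HL i)))) <= INR m * (eta * eta)).
  { unfold pinner. rewrite <- sumI_const. apply sumI_le. intros i. unfold padd, popp.
    assert (Hs := HN i n Hn). set (t := hinner _ _) in *.
    assert (0 <= t) by apply hinner_pos.
    assert (Hst: sqrt t * sqrt t = t) by (apply sqrt_sqrt; auto).
    assert (0 <= sqrt t) by apply sqrt_pos. nra. }
  assert (INR m * (eta * eta) < eps * eps).
  { unfold eta. replace (INR m * (eps / (INR m + 1) * (eps / (INR m + 1)))) with
      (eps * eps * (INR m / ((INR m + 1) * (INR m + 1)))) by (field; lra).
    assert (INR m / ((INR m + 1) * (INR m + 1)) < 1).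
    { apply (Rmult_lt_reg_r ((INR m + 1) * (INR m + 1))). nra.
      unfold Rdiv. rewrite Rmult_assoc, Rinv_l. nra. nra. }
    assert (0 < eps * eps) by nra. nra. }
  apply Rsqr_incrst_0. rewrite Rsqr_sqrt. unfold Rsqr; lra.
  unfold pinner; apply sumI_nonneg; intros; apply hinner_pos. apply sqrt_pos. lra.
Qed.

Definition PX : Hilbert.
Proof.
  refine {| carrier := PH H; hzero := fun i => hzero; hadd := padd; hopp := popp;
    hscal := pscal; hinner := pinner; hcomplete := PX_complete |}.
  - intros; apply functional_extensionality_dep; intro i; apply hadd_assoc.
  - intros; apply functional_extensionality_dep; intro i; apply hadd_comm.
  - intros; apply functional_extensionality_dep; intro i; apply hadd_0l.
  - intros; apply functional_extensionality_dep; intro i; apply hadd_oppl.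
  - intros; apply functional_extensionality_dep; intro i; apply hscal_assoc.
  - intros; apply functional_extensionality_dep; intro i; apply hscal_1.
  - intros; apply functional_extensionality_dep; intro i; apply hscal_addr.
  - intros; apply functional_extensionality_dep; intro i; apply hscal_addl.
  - intros; apply sumI_ext; intro i; apply hinner_sym.
  - intros; unfold pinner; rewrite <- sumI_plus; apply sumI_ext; intro i; apply hinner_addl.
  - intros; unfold pinner; rewrite <- sumI_scal; apply sumI_ext; intro i; apply hinner_scall.
  - intros; apply sumI_nonneg; intro i; apply hinner_pos.
  - intros x Hx; apply functional_extensionality_dep; intro i. apply hinner_def.
    apply (sumI_zero m (fun i => hinner (x i) (x i))); auto. intros; apply hinner_pos.
Defined.
End Prod.


Definition inc (f : nat -> nat) := forall n, (f n < f (S n))%nat.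

Lemma inc_lt f : inc f -> forall a b, (a < b)%nat -> (f a < f b)%nat.
Proof.
  intros Hf a b Hab. induction Hab. apply Hf. specialize (Hf m). lia.
Qed.
Lemma inc_ge f : inc f -> forall n, (n <= f n)%nat.
Proof. intros Hf n. induction n. lia. specialize (Hf n). lia. Qed.

Lemma Un_cv_const c : Un_cv (fun _ => c) c.
Proof. intros e He. exists O. intros. unfold R_dist. rewrite Rminus_diag, Rabs_R0. lra. Qed.

Lemma Un_cv_tail s t l N0 : Un_cv s l -> (forall n, (n >= N0)%nat -> exists k, (k >= n)%nat /\ t n = s k) ->
  Un_cv t l.
Proof.
  intros Hs Ht e He. destruct (Hs e He) as [N HN]. exists (max N N0). intros n Hn.
  destruct (Ht n) as [k [Hk E]]. lia. rewrite E. apply HN. lia.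
Qed.

Lemma Un_cv_sub s l f : Un_cv s l -> inc f -> Un_cv (fun n => s (f n)) l.
Proof.
  intros Hs Hf. apply (Un_cv_tail s _ l O Hs). intros n _. exists (f n). split; auto.
  apply inc_ge; auto.
Qed.

Lemma Un_cv_le s l B : Un_cv s l -> (forall n, s n <= B) -> l <= B.
Proof.
  intros Hs HB. destruct (Rle_dec l B); auto. exfalso.
  destruct (Hs (l - B)) as [N HN]. lra. specialize (HN N (le_n _)). specialize (HB N).
  unfold R_dist in HN. apply Rabs_def2 in HN. lra.
Qed.
Lemma Un_cv_ge s l B : Un_cv s l -> (forall n, B <= s n) -> B <= l.
Proof.
  intros Hs HB. assert (- l <= - B). apply (Un_cv_le (fun n => - s n)). apply CV_opp; auto.
  intros n; specialize (HB n); lra. lra.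
Qed.
Lemma Un_cv_le_ev s l B N : Un_cv s l -> (forall n, (n >= N)%nat -> s n <= B) -> l <= B.
Proof.
  intros Hs HB. apply (Un_cv_le (fun n => s (n + N)%nat)). 
  apply (Un_cv_tail s _ l O Hs). intros n _. exists (n+N)%nat; split; auto; lia.
  intros; apply HB; lia.
Qed.
Lemma Un_cv_ge_ev s l B N : Un_cv s l -> (forall n, (n >= N)%nat -> B <= s n) -> B <= l.
Proof.
  intros Hs HB. assert (- l <= - B). apply (Un_cv_le_ev (fun n => - s n) _ _ N). apply CV_opp; auto.
  intros n Hn; specialize (HB n Hn); lra. lra.
Qed.

Lemma squeeze0 s t : (forall n, 0 <= s n <= t n) -> Un_cv t 0 -> Un_cv s 0.
Proof.
  intros H Ht e He. destruct (Ht e He) as [N HN]. exists N. intros n Hn.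
  specialize (HN n Hn). specialize (H n). unfold R_dist in *. rewrite Rminus_0_r in *.
  rewrite Rabs_right in * by lra. lra.
Qed.

Lemma Un_cv_scal s l a : Un_cv s l -> Un_cv (fun n => a * s n) (a * l).
Proof. intros. apply CV_mult; auto. apply Un_cv_const. Qed.

Lemma inv_small eta : eta > 0 -> exists N, forall n, (n >= N)%nat -> / (INR n + 1) < eta.
Proof.
  intros He. destruct (archimed (/ eta)) as [H1 _].
  assert (0 < / eta) by (apply Rinv_0_lt_compat; lra).
  exists (Z.to_nat (up (/ eta))). intros n Hn.
  assert (INR (Z.to_nat (up (/ eta))) = IZR (up (/eta))).
  { rewrite INR_IZR_INZ. f_equal. apply Z2Nat.id. apply le_IZR. lra. }
  apply le_INR in Hn. 
  assert (/ eta < INR n + 1) by lra.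
  apply (Rmult_lt_reg_l (INR n + 1)). lra. rewrite Rinv_r by lra.
  apply (Rmult_lt_reg_l (/ eta)); auto. rewrite Rmult_1_r.
  replace (/ eta * ((INR n + 1) * eta)) with (INR n + 1) by (field; lra). auto.
Qed.

Lemma cv_inv0 : Un_cv (fun n => / (INR n + 1)) 0.
Proof.
  intros e He. destruct (inv_small e He) as [N HN]. exists N. intros n Hn.
  unfold R_dist. rewrite Rminus_0_r. assert (0 < / (INR n + 1)).
  apply Rinv_0_lt_compat. assert (H:=pos_INR n). lra.
  rewrite Rabs_right by lra. auto.
Qed.

Lemma small_le a b : (forall e, e > 0 -> a <= b + e) -> a <= b.
Proof. intros H. destruct (Rle_dec a b); auto. specialize (H ((a - b)/2)). lra. Qed.

Lemma real_VI a b : 0 <= b -> (forall t, 0 < t <= 1 -> 2 * a <= t * b) -> a <= 0.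
Proof.
  intros Hb H. destruct (Rle_dec a 0); auto. exfalso.
  assert (Ha : 0 < a) by lra.
  specialize (H (a / (a + b))).
  assert (0 < a / (a + b) <= 1).
  { split. apply Rdiv_lt_0_compat; lra. apply (Rmult_le_reg_r (a + b)). lra.
    unfold Rdiv. rewrite Rmult_assoc, Rinv_l by lra. lra. }
  specialize (H H0).
  assert (a / (a + b) * b <= a).
  { apply (Rmult_le_reg_r (a + b)). lra. replace (a / (a + b) * b * (a + b)) with (a * b) by (field; lra). nra. }
  lra.
Qed.

Lemma sqrt_lt_sq x e : e > 0 -> 0 <= x < e * e -> sqrt x < e.
Proof.
  intros He Hx. rewrite <- (sqrt_square e) by lra. apply sqrt_lt_1_alt. lra.
Qed.

Lemma cv_of_sqrt (X : Hilbert) (u : nat -> X) l :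
  (forall eps, eps > 0 -> exists N, forall n, (n >= N)%nat ->
        sqrt (hinner (hadd (u n) (hopp l)) (hadd (u n) (hopp l))) < eps) ->
  Un_cv (fun n => hnorm (hsub (u n) l)) 0.
Proof.
  intros H e He. destruct (H e He) as [N HN]. exists N. intros n Hn. unfold R_dist.
  rewrite Rminus_0_r, Rabs_right. apply HN; auto. apply Rle_ge, hnorm_nonneg.
Qed.

Section Proj.
Variable X : Hilbert.
Implicit Types x y z u v w c : X.

Definition hclosed (M : X -> Prop) := forall (u : nat -> X) l, (forall n, M (u n)) ->
  Un_cv (fun n => hnorm (hsub (u n) l)) 0 -> M l.
Definition hconvex (M : X -> Prop) := forall x y t, M x -> M y -> 0 <= t <= 1 ->
  M (hadd (hscal (1 - t) x) (hscal t y)).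

Lemma min_VI M v p : hconvex M -> M p -> (forall c, M c -> hnorm (hsub v p) <= hnorm (hsub v c)) ->
  forall c, M c -> hinner (hsub v p) (hsub c p) <= 0.
Proof.
  intros Hcv Hp Hmin c Hc.
  apply (real_VI _ (hinner (hsub c p) (hsub c p))). apply hinner_pos.
  intros t Ht.
  assert (Hct := Hcv p c t Hp Hc ltac:(lra)).
  specialize (Hmin _ Hct).
  assert (Hsq : hinner (hsub v p) (hsub v p) <= hinner (hsub v (hadd (hscal (1 - t) p) (hscal t c))) (hsub v (hadd (hscal (1 - t) p) (hscal t c)))).
  { rewrite <- !hnorm_sq. assert (H0 := hnorm_nonneg X (hsub v p)). nra. }
  revert Hsq. hexp. rewrite (hinner_sym _ p v), (hinner_sym _ c v), (hinner_sym _ c p). intros. nra.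
Qed.

Lemma proj_exists M v : (exists c, M c) -> hclosed M -> hconvex M ->
  exists p, M p /\ forall c, M c -> hnorm (hsub v p) <= hnorm (hsub v c).
Proof.
  intros [c0 Hc0] Hcl Hcv.
  set (E := fun r => exists c, M c /\ r = - hnorm (hsub v c)).
  assert (HE : bound E). { exists 0. intros r [c [_ ->]]. assert (H:= hnorm_nonneg X (hsub v c)). lra. }
  destruct (completeness E HE) as [s [Hs1 Hs2]]. { exists (- hnorm (hsub v c0)). exists c0; auto. }
  set (d := - s).
  assert (Hd1 : forall c, M c -> d <= hnorm (hsub v c)).
  { intros c Hc. assert (- hnorm (hsub v c) <= s) by (apply Hs1; exists c; auto). unfold d; lra. }
  assert (Hd2 : forall eta, eta > 0 -> exists c, M c /\ hnorm (hsub v c) < d + eta).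
  { intros eta He. apply NNPP. intros Hn.
    assert (s <= s - eta). apply Hs2. intros r [c [Hc ->]].
    destruct (Rle_dec (- hnorm (hsub v c)) (s - eta)); auto. exfalso. apply Hn. exists c. split; auto. unfold d; lra.
    lra. }
  assert (Hd0 : 0 <= d). { assert (s <= 0). apply Hs2. intros r [c [_ ->]].
     assert (H:= hnorm_nonneg X (hsub v c)). lra. unfold d; lra. }
  assert (Hcn : forall n : nat, {c | M c /\ hnorm (hsub v c) < d + / (INR n + 1)}).
  { intros n. apply constructive_indefinite_description. apply Hd2. apply Rinv_0_lt_compat. pose proof (pos_INR n); lra. }
  set (cs := fun n => proj1_sig (Hcn n)).
  assert (Hcs : forall n, M (cs n) /\ hnorm (hsub v (cs n)) < d + / (INR n + 1)) by (intro n; exact (proj2_sig (Hcn n))).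
  assert (Hinv : forall n, 0 < / (INR n + 1) <= 1).
  { intros n. pose proof (pos_INR n). split. apply Rinv_0_lt_compat; lra.
    rewrite <- Rinv_1. apply Rinv_le_contravar; lra. }
  assert (Hpar : forall p q, hinner (hsub (cs p) (cs q)) (hsub (cs p) (cs q)) <= 2 * (2*d+1) * (/ (INR p + 1) + / (INR q + 1))).
  { intros p q. destruct (Hcs p) as [Mp Np]; destruct (Hcs q) as [Mq Nq].
    assert (Hip := Hinv p); assert (Hiq := Hinv q).
    set (cp := cs p) in *; set (cq := cs q) in *.
    assert (Hmid := Hcv cp cq (1/2) Mp Mq ltac:(lra)).
    assert (Hm := Hd1 _ Hmid).
    set (ip := / (INR p + 1)) in *; set (iq := / (INR q+1)) in *.
    assert (Ep : hinner (hsub v cp) (hsub v cp) <= d*d + (2*d+1)*ip).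
    { rewrite <- hnorm_sq. assert (H0:=hnorm_nonneg X (hsub v cp)). nra. }
    assert (Eq : hinner (hsub v cq) (hsub v cq) <= d*d + (2*d+1)*iq).
    { rewrite <- hnorm_sq. assert (H0:=hnorm_nonneg X (hsub v cq)). nra. }
    assert (Em : d * d <= hinner (hsub v (hadd (hscal (1 - 1/2) cp) (hscal (1/2) cq))) (hsub v (hadd (hscal (1 - 1/2) cp) (hscal (1/2) cq)))).
    { rewrite <- hnorm_sq. nra. }
    revert Ep Eq Em. hexp. rewrite (hinner_sym _ cp v), (hinner_sym _ cq v), (hinner_sym _ cq cp). intros. nra. }
  assert (Hcau : forall eps, eps > 0 -> exists N, forall p q, (p >= N)%nat -> (q >= N)%nat ->
        sqrt (hinner (hadd (cs p) (hopp (cs q))) (hadd (cs p) (hopp (cs q)))) < eps).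
  { intros eps He. destruct (inv_small (eps * eps / (4 * (2 * d + 1)))) as [N HN].
    apply Rdiv_lt_0_compat; nra.
    exists N. intros p q Hp Hq. apply sqrt_lt_sq. lra. split. apply hinner_pos.
    eapply Rle_lt_trans. apply (Hpar p q).
    assert (H1 := HN p Hp); assert (H2 := HN q Hq).
    apply Rlt_le_trans with (2 * (2 * d + 1) * (eps * eps / (4 * (2 * d + 1)) + eps * eps / (4 * (2 * d + 1)))).
    apply Rmult_lt_compat_l. lra. lra. right; field; lra. }
  destruct (hcomplete X cs Hcau) as [l Hl].
  assert (Hcv_l : Un_cv (fun n => hnorm (hsub (cs n) l)) 0) by (apply cv_of_sqrt; auto).
  assert (Ml : M l) by (apply (Hcl cs l); auto; intro n; apply Hcs).
  exists l. split; auto. intros c Hc. apply Rle_trans with d; auto.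
  apply small_le. intros e He.
  destruct (inv_small (e/2)) as [N1 HN1]. lra.
  destruct (Hcv_l (e/2)) as [N2 HN2]. lra.
  set (n := max N1 N2).
  assert (A1 := HN1 n ltac:(unfold n; lia)). assert (A2 := HN2 n ltac:(unfold n; lia)).
  unfold R_dist in A2. rewrite Rminus_0_r, Rabs_right in A2 by (apply Rle_ge, hnorm_nonneg).
  assert (A3 := proj2 (Hcs n)).
  assert (A4 := tri_sub X v (cs n) l). lra.
Qed.

Lemma proj_VI M v : (exists c, M c) -> hclosed M -> hconvex M ->
  exists p, M p /\ forall c, M c -> hinner (hsub v p) (hsub c p) <= 0.
Proof.
  intros Hne Hcl Hcv. destruct (proj_exists M v Hne Hcl Hcv) as [p [Mp Hp]].
  exists p; split; auto. apply min_VI; auto.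
Qed.
End Proj.


Lemma BW_ex (s : nat -> R) K : (forall n, Rabs (s n) <= K) ->
  exists f, inc f /\ exists l, Un_cv (fun n => s (f n)) l.
Proof.
  intros Hb.
  destruct (Bolzano_Weierstrass s (fun c => -K <= c <= K) (compact_P3 (-K) K)) as [l Hl].
  { intros n. specialize (Hb n). pose proof (Rle_abs (s n)). pose proof (Rle_abs (- s n)). rewrite Rabs_Ropp in *. lra. }
  assert (VA : forall N k, exists p, (N <= p)%nat /\ Rabs (s p - l) < / (INR k + 1)).
  { intros N k. assert (Hp : 0 < / (INR k + 1)) by (apply Rinv_0_lt_compat; pose proof (pos_INR k); lra).
    destruct (Hl (disc l (mkposreal _ Hp)) N) as [p [Hp1 Hp2]].
    exists (mkposreal _ Hp). intros x Hx; exact Hx.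
    exists p; split; auto. }
  set (pick := fun N k => proj1_sig (constructive_indefinite_description _ (VA N k))).
  assert (Hpick : forall N k, (N <= pick N k)%nat /\ Rabs (s (pick N k) - l) < / (INR k + 1)).
  { intros. exact (proj2_sig (constructive_indefinite_description _ (VA N k))). }
  set (phi := fix phi n := match n with O => pick O O | S n' => pick (S (phi n')) n end).
  exists phi. split.
  - intros n. simpl. destruct (Hpick (S (phi n)) (S n)). lia.
  - exists l. intros e He. destruct (inv_small e He) as [N HN]. exists N. intros n Hn.
    unfold R_dist. destruct n.
    + simpl. destruct (Hpick O O). eapply Rlt_trans; eauto; apply HN; auto.
    + simpl. destruct (Hpick (S (phi n)) (S n)). eapply Rlt_trans; eauto; apply HN; auto.
Qed.

Definition BW_sig (s : nat -> R) K (Hb : forall n, Rabs (s n) <= K) :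
  {f : nat -> nat | inc f /\ exists l, Un_cv (fun n => s (f n)) l} :=
  constructive_indefinite_description _ (BW_ex s K Hb).

Section Diag.
Variables (r : nat -> nat -> R) (K : nat -> R) (Hr : forall j n, Rabs (r j n) <= K j).

Fixpoint psi (j : nat) : nat -> nat :=
  match j with
  | O => fun n => n
  | S j' => fun n => psi j' (proj1_sig (BW_sig (fun n => r j' (psi j' n)) (K j') (fun n => Hr j' (psi j' n))) n)
  end.

Lemma psi_inc j : inc (psi j).
Proof.
  induction j; intros n; simpl. lia.
  destruct (proj2_sig (BW_sig (fun n => r j (psi j n)) (K j) (fun n => Hr j (psi j n)))) as [Hf _].
  apply inc_lt; auto.
Qed.

Lemma psi_cv j : exists l, Un_cv (fun n => r j (psi (S j) n)) l.
Proof.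
  simpl. destruct (proj2_sig (BW_sig (fun n => r j (psi j n)) (K j) (fun n => Hr j (psi j n)))) as [Hf Hl]. auto.
Qed.

Lemma psi_shift d j n : exists k, (k >= n)%nat /\ psi (d + j) n = psi j k.
Proof.
  revert n. induction d; intros n.
  - exists n. simpl. auto.
  - simpl. destruct (proj2_sig (BW_sig (fun n => r (d + j)%nat (psi (d + j) n)) (K (d + j)%nat) (fun n => Hr (d + j)%nat (psi (d + j) n)))) as [Hf _].
    set (f := proj1_sig _) in *.
    destruct (IHd (f n)) as [k [Hk E]]. exists k. split; auto. pose proof (inc_ge f Hf n). lia.
Qed.

Definition dphi n := psi n n.

Lemma dphi_inc : inc dphi.
Proof.
  intros n. unfold dphi. simpl.
  destruct (proj2_sig (BW_sig (fun n0 => r n (psi n n0)) (K n) (fun n0 => Hr n (psi n n0)))) as [Hf _].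
  set (f := proj1_sig _) in *.
  apply inc_lt. apply psi_inc. pose proof (inc_ge f Hf (S n)). lia.
Qed.

Lemma dphi_cv j : exists l, Un_cv (fun n => r j (dphi n)) l.
Proof.
  destruct (psi_cv j) as [l Hl]. exists l.
  apply (Un_cv_tail _ _ l (S j) Hl). intros n Hn.
  destruct (psi_shift (n - S j) (S j) n) as [k [Hk E]]. exists k. split; auto.
  unfold dphi. replace (n - S j + S j)%nat with n in E by lia. rewrite E. auto.
Qed.
End Diag.

Lemma Un_cv_ext s t l : (forall n, s n = t n) -> Un_cv s l -> Un_cv t l.
Proof. intros E H e He. destruct (H e He) as [N HN]. exists N. intros. rewrite <- E. auto. Qed.

Section WC.
Variable X : Hilbert.
Implicit Types x y v c : X.

Lemma subspace_orth (M : X -> Prop) v p : (forall x y, M x -> M y -> M (hadd x y)) ->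
  (forall a x, M x -> M (hscal a x)) -> M p -> (forall c, M c -> hinner (hsub v p) (hsub c p) <= 0) ->
  forall c, M c -> hinner (hsub v p) c = 0.
Proof.
  intros Hadd Hsc Mp HVI c Mc.
  assert (H1 := HVI _ (Hadd _ _ Mp Mc)).
  assert (H2 := HVI _ (Hadd _ _ Mp (Hsc (-1) _ Mc))).
  revert H1 H2. hexp. intros. lra.
Qed.

Lemma subspace_convex (M : X -> Prop) : (forall x y, M x -> M y -> M (hadd x y)) ->
  (forall a x, M x -> M (hscal a x)) -> hconvex X M.
Proof. intros Hadd Hsc x y t Mx My _. apply Hadd; apply Hsc; auto. Qed.

Theorem weak_compact (u : nat -> X) K : (forall n, hnorm (u n) <= K) ->
  exists phi, inc phi /\ exists w, weak_cv (fun n => u (phi n)) w.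
Proof.
  intros Hu.
  assert (HK : 0 <= K) by (eapply Rle_trans; [apply hnorm_nonneg|apply (Hu O)]).
  set (r := fun j n => hinner (u n) (u j)).
  assert (Hr : forall j n, Rabs (r j n) <= K * hnorm (u j)).
  { intros j n. unfold r. eapply Rle_trans. apply CS. apply Rmult_le_compat_r. apply hnorm_nonneg. auto. }
  set (phi := dphi r _ Hr).
  exists phi. split. apply dphi_inc.
  set (w' := fun n => u (phi n)).
  assert (Hw' : forall n, hnorm (w' n) <= K) by (intros; apply Hu).
  assert (Hbd : forall n v, Rabs (hinner (w' n) v) <= K * hnorm v).
  { intros n v. eapply Rle_trans. apply CS. apply Rmult_le_compat_r. apply hnorm_nonneg. auto. }
  set (M := fun v => exists l, Un_cv (fun n => hinner (w' n) v) l).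
  assert (Madd : forall x y, M x -> M y -> M (hadd x y)).
  { intros x y [l1 H1] [l2 H2]. exists (l1 + l2). eapply Un_cv_ext; [|apply CV_plus; [exact H1|exact H2]].
    intros; simpl; rewrite hinner_addr; auto. }
  assert (Msc : forall a x, M x -> M (hscal a x)).
  { intros a x [l1 H1]. exists (a * l1). eapply Un_cv_ext; [|apply Un_cv_scal; exact H1].
    intros; simpl; rewrite hinner_scalr; auto. }
  assert (Mu : forall j, M (u j)).
  { intros j. destruct (dphi_cv r _ Hr j) as [l Hl]. exists l. exact Hl. }
  assert (Mcl : hclosed X M).
  { intros vs v Hvs Hcv.
    assert (Hc : Cauchy_crit (fun n => hinner (w' n) v)).
    { intros e He.
      destruct (Hcv (e / (3 * (K + 1)))) as [k Hk]. apply Rdiv_lt_0_compat; lra.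
      specialize (Hk k (le_n _)). unfold R_dist in Hk. rewrite Rminus_0_r, Rabs_right in Hk by (apply Rle_ge, hnorm_nonneg).
      destruct (Hvs k) as [l Hl]. destruct (CV_Cauchy _ (exist _ l Hl) (e/3)) as [N HN]. lra.
      exists N. intros n1 n2 Hn1 Hn2. specialize (HN n1 n2 Hn1 Hn2). unfold R_dist in *.
      assert (E : hinner (w' n1) v - hinner (w' n2) v =
          - hinner (w' n1) (hsub (vs k) v) + (hinner (w' n1) (vs k) - hinner (w' n2) (vs k)) + hinner (w' n2) (hsub (vs k) v)).
      { hexp. ring. }
      rewrite E.
      assert (B1 := Hbd n1 (hsub (vs k) v)). assert (B2 := Hbd n2 (hsub (vs k) v)).
      assert (K * hnorm (hsub (vs k) v) <= e / 3).
      { apply Rle_trans with ((K + 1) * (e / (3 * (K + 1)))).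
        apply Rmult_le_compat; try lra. apply hnorm_nonneg. right; field; lra. }
      eapply Rle_lt_trans. apply Rabs_triang. eapply Rle_lt_trans. apply Rplus_le_compat_r. apply Rabs_triang.
      rewrite Rabs_Ropp. lra. }
    destruct (R_complete _ Hc) as [l Hl]. exists l. exact Hl. }
  assert (Mall : forall v, M v).
  { intros v. destruct (proj_VI X M v) as [p [Mp Hp]]. exists (u O); auto. auto.
    apply subspace_convex; auto.
    assert (Ho := subspace_orth M v p Madd Msc Mp Hp).
    destruct Mp as [l Hl]. exists l. eapply Un_cv_ext; [|exact Hl]. intros n.
    assert (E := Ho (w' n) (Mu _)). revert E. hexp. rewrite !(hinner_sym _ (w' n)). intros. lra. }
  set (f := fun v => proj1_sig (constructive_indefinite_description _ (Mall v))).
  assert (Hf : forall v, Un_cv (fun n => hinner (w' n) v) (f v)).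
  { intros v. exact (proj2_sig (constructive_indefinite_description _ (Mall v))). }
  clearbody f.
  assert (fadd : forall x y, f (hadd x y) = f x + f y).
  { intros. apply (UL_sequence _ _ _ (Hf _)). eapply Un_cv_ext; [|apply CV_plus; [exact (Hf x)|exact (Hf y)]].
    intros; simpl; rewrite hinner_addr; auto. }
  assert (fsc : forall a x, f (hscal a x) = a * f x).
  { intros. apply (UL_sequence _ _ _ (Hf _)). eapply Un_cv_ext; [|apply Un_cv_scal; exact (Hf x)].
    intros; simpl; rewrite hinner_scalr; auto. }
  assert (fopp : forall x, f (hopp x) = - f x).
  { intros. apply (UL_sequence _ _ _ (Hf _)). eapply Un_cv_ext; [|apply CV_opp; exact (Hf x)].
    intros; simpl; rewrite hinner_oppr; auto. }
  assert (f0 : f hzero = 0).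
  { apply (UL_sequence _ _ _ (Hf _)). eapply Un_cv_ext; [|apply Un_cv_const].
    intros; simpl; rewrite hinner_0r; auto. }
  assert (fbd : forall v, Rabs (f v) <= K * hnorm v).
  { intros v. apply Rabs_le. split.
    - apply (Un_cv_ge _ _ _ (Hf v)). intros n. specialize (Hbd n v). pose proof (Rle_abs (- hinner (w' n) v)). rewrite Rabs_Ropp in *. lra.
    - apply (Un_cv_le _ _ _ (Hf v)). intros n. specialize (Hbd n v). eapply Rle_trans; [apply Rle_abs|auto]. }
  destruct (classic (forall v, f v = 0)) as [Hz|Hnz].
  - exists hzero. intros v. rewrite hinner_0l, <- (Hz v). apply Hf.
  - apply not_all_ex_not in Hnz. destruct Hnz as [e0 He0].
    set (N := fun v => f v = 0).
    assert (Ncl : hclosed X N).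
    { intros vs v Hvs Hcv. unfold N. apply NNPP; intro Hne. apply (Rabs_no_R0 _ Hne). apply Rle_antisym; [|apply Rabs_pos].
      replace 0 with (K * 0) by ring.
      apply (Un_cv_ge (fun k => K * hnorm (hsub (vs k) v))). apply Un_cv_scal; auto.
      intros k. replace (f v) with (- f (hsub (vs k) v)). rewrite Rabs_Ropp. apply fbd.
      unfold hsub. rewrite fadd, fopp, (Hvs k). ring. }
    assert (Nadd : forall x y, N x -> N y -> N (hadd x y)).
    { unfold N; intros; rewrite fadd; lra. }
    assert (Nsc : forall a x, N x -> N (hscal a x)).
    { unfold N; intros. rewrite fsc, H. ring. }
    destruct (proj_VI X N e0) as [p0 [Np0 Hp0]]. exists hzero; exact f0. exact Ncl. apply subspace_convex; auto.
    assert (Ho := subspace_orth N e0 p0 Nadd Nsc Np0 Hp0).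
    set (e := hsub e0 p0) in *.
    assert (fe : f e = f e0). { unfold e, hsub. rewrite fadd, fopp. unfold N in Np0. lra. }
    assert (Hee : hinner e e <> 0).
    { intros E. apply hinner_def in E. rewrite E, f0 in fe. auto. }
    assert (Hev : forall v, hinner e v = f v / f e * hinner e e).
    { intros v. assert (Nc : N (hsub v (hscal (f v / f e) e))).
      { unfold N, hsub. rewrite fadd, fopp, fsc. field. rewrite fe; auto. }
      assert (E := Ho _ Nc). revert E. fold e. hexp. rewrite (hinner_sym _ e v). intros. lra. }
    exists (hscal (f e / hinner e e) e). intros v. rewrite hinner_scall, (Hev v).
    replace (f e / hinner e e * (f v / f e * hinner e e)) with (f v). apply Hf.
    field. auto.
Qed.
End WC.


Definition summ (f : nat -> R) := exists S, Un_cv (fun N => sum_f_R0 f N) S.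

Lemma sum_lt_f_R0 e n : sum_lt (S n) e = sum_f_R0 e n.
Proof. induction n. simpl. ring. change (sum_lt (S (S n)) e) with (sum_lt (S n) e + e (S n)). rewrite IHn. simpl. ring. Qed.

Lemma summ_plus f g : summ f -> summ g -> summ (fun n => f n + g n).
Proof.
  intros [S1 H1] [S2 H2]. exists (S1 + S2). eapply Un_cv_ext; [|apply CV_plus; [exact H1|exact H2]].
  intros; simpl. rewrite plus_sum. auto.
Qed.
Lemma summ_zero : summ (fun _ => 0).
Proof. exists 0. eapply Un_cv_ext; [|apply Un_cv_const]. intros n; induction n; simpl; auto. rewrite <- IHn; ring. Qed.

Lemma summ_sum_lt (G : nat -> nat -> R) k : (forall j, summ (G j)) -> summ (fun n => sum_lt k (fun j => G j n)).
Proof.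
  intros HG. induction k. simpl. apply summ_zero. simpl. apply summ_plus; auto.
Qed.

Lemma partial_incr f : (forall n, 0 <= f n) -> forall a b, (a <= b)%nat -> sum_f_R0 f a <= sum_f_R0 f b.
Proof.
  intros Hf a b Hab. induction Hab. lra. simpl. specialize (Hf (S m)). lra.
Qed.

Lemma summ_bound f : (forall n, 0 <= f n) -> summ f -> exists S, forall n, sum_f_R0 f n <= S.
Proof.
  intros Hf [Sg HS]. exists Sg. intros n. apply (Un_cv_ge_ev _ _ _ n HS). intros k Hk. apply partial_incr; auto.
Qed.

Lemma summ_le f g : (forall n, 0 <= f n <= g n) -> summ g -> summ f.
Proof.
  intros Hfg Hg. destruct (summ_bound g) as [Sg HS]; auto. intros n; specialize (Hfg n); lra.
  destruct (growing_cv (fun N => sum_f_R0 f N)) as [l Hl].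
  - intros n. simpl. specialize (Hfg (S n)). lra.
  - exists Sg. intros x [i ->]. eapply Rle_trans; [|apply (HS i)]. apply sum_Rle. intros; apply Hfg.
  - exists l; auto.
Qed.

Lemma summ_scal f a : summ f -> summ (fun n => a * f n).
Proof.
  intros [Sg HS]. exists (a * Sg). eapply Un_cv_ext; [|apply Un_cv_scal; exact HS].
  intros n; simpl. induction n; simpl; auto. rewrite <- IHn. ring.
Qed.

Lemma Un_cv_shift u l : Un_cv (fun n => u (S n)) l -> Un_cv u l.
Proof.
  intros H e He. destruct (H e He) as [N HN]. exists (S N). intros n Hn. destruct n. lia. apply HN. lia.
Qed.

Lemma summ_term0 f : summ f -> Un_cv f 0.
Proof.
  intros [Sg HS]. apply Un_cv_shift. replace 0 with (Sg - Sg) by ring.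
  eapply Un_cv_ext; [|apply CV_minus; [apply (Un_cv_tail _ (fun n => sum_f_R0 f (S n)) Sg O HS)|exact HS]].
  intros n. simpl. ring. intros n _. exists (S n). split; auto.
Qed.

Lemma quasi_fejer a e : (forall n, 0 <= a n) -> (forall n, 0 <= e n) -> summ e ->
  (forall n, a (S n) <= a n + e n) -> exists L, Un_cv a L.
Proof.
  intros Ha He Hs Hr.
  destruct Hs as [Sg HS].
  assert (HSb : forall n, sum_lt n e <= Sg).
  { intros n. destruct n. simpl. apply (Un_cv_ge _ _ _ HS). intros k. apply cond_pos_sum; auto.
    rewrite sum_lt_f_R0. apply (Un_cv_ge_ev _ _ _ n HS). intros k Hk. apply partial_incr; auto. }
  destruct (decreasing_cv (fun n => a n - sum_lt n e)) as [l Hl].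
  - intros n. simpl. specialize (Hr n). lra.
  - exists Sg. intros x [i ->]. unfold opp_seq. specialize (HSb i). specialize (Ha i). lra.
  - exists (l + Sg). eapply Un_cv_ext; [|apply (CV_plus (fun n => a n - sum_lt n e) (fun n => sum_lt n e)); [exact Hl|]]. intros; simpl; ring.
    apply Un_cv_shift. eapply Un_cv_ext; [|exact HS]. intros; rewrite sum_lt_f_R0; auto.
Qed.

Lemma cv_bounded s l : Un_cv s l -> exists K, forall n, s n <= K.
Proof.
  intros H. destruct (H 1) as [N HN]. lra.
  exists (Rabs l + 1 + sum_lt N (fun k => Rabs (s k))). intros n.
  assert (0 <= sum_lt N (fun k => Rabs (s k))) by (apply sum_lt_nonneg; intros; apply Rabs_pos).
  destruct (le_lt_dec N n).
  - specialize (HN n l0). unfold R_dist in HN. pose proof (Rle_abs (s n - l)). pose proof (Rle_abs l). lra.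
  - pose proof (sum_lt_term_le N (fun k => Rabs (s k)) n). pose proof (Rle_abs (s n)).
    pose proof (Rabs_pos l).
    assert (Rabs (s n) <= sum_lt N (fun k => Rabs (s k))) by (apply H1; auto; intros; apply Rabs_pos). lra.
Qed.

Lemma sq_cv0 d : (forall n, 0 <= d n) -> Un_cv (fun n => d n * d n) 0 -> Un_cv d 0.
Proof.
  intros Hd H e He. destruct (H (e * e)) as [N HN]. nra. exists N. intros n Hn. specialize (HN n Hn).
  unfold R_dist in *. rewrite Rminus_0_r in *. rewrite Rabs_right in * by (specialize (Hd n); nra).
  specialize (Hd n). nra.
Qed.

Lemma not_cv_sub s l : ~ Un_cv s l -> exists eta, eta > 0 /\ exists psi, inc psi /\ forall n, eta <= Rabs (s (psi n) - l).
Proof.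
  intros Hn. apply NNPP. intros Hc. apply Hn. intros e He. apply NNPP. intros HN.
  assert (Hall : forall N, exists n, (n >= N)%nat /\ e <= Rabs (s n - l)).
  { intros N. apply NNPP. intros H2. apply HN. exists N. intros n Hn'. unfold R_dist.
    destruct (Rlt_le_dec (Rabs (s n - l)) e); auto. exfalso. apply H2. exists n; auto. }
  set (pk := fun N => proj1_sig (constructive_indefinite_description _ (Hall N))).
  assert (Hpk : forall N, (pk N >= N)%nat /\ e <= Rabs (s (pk N) - l)) by (intros; exact (proj2_sig (constructive_indefinite_description _ (Hall N)))).
  set (psi := fix psi n := match n with O => pk O | S n' => pk (S (psi n')) end).
  apply Hc. exists e. split; auto. exists psi. split.
  - intros n. simpl. destruct (Hpk (S (psi n))). lia.
  - intros n. destruct n; simpl; apply Hpk.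
Qed.

Lemma inc_comp f g : inc f -> inc g -> inc (fun n => f (g n)).
Proof. intros Hf Hg n. apply inc_lt; auto. Qed.

Lemma sum_lt_sq_le n t : (forall k, 0 <= t k) -> sum_lt n (fun k => t k * t k) <= sum_lt n t * sum_lt n t.
Proof.
  intros Ht. induction n; simpl. lra.
  assert (0 <= sum_lt n t) by (apply sum_lt_nonneg; auto). specialize (Ht n). nra.
Qed.

Section PS.
Variable m : nat.
Variable H : idx m -> Hilbert.
Let X := PX m H.

Lemma upd_same (x : PH H) i y : upd x i y i = y.
Proof.
  unfold upd. destruct (idx_eq_dec m i i) as [e|n]; [|contradiction].
  rewrite (UIP_dec (idx_eq_dec m) e eq_refl). reflexivity.
Qed.
Lemma upd_other (x : PH H) i y j : i <> j -> upd x i y j = x j.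
Proof. intros. unfold upd. destruct (idx_eq_dec m i j); [contradiction|auto]. Qed.
Lemma upd_upd (x : PH H) i u v : upd (upd x i u) i v = upd x i v.
Proof. apply functional_extensionality_dep; intro j. unfold upd. destruct (idx_eq_dec m i j); auto. Qed.
Lemma upd_id (x : PH H) i : upd x i (x i) = x.
Proof.
  apply functional_extensionality_dep; intro j. unfold upd. destruct (idx_eq_dec m i j) as [e|]; auto.
  subst j. reflexivity.
Qed.

Lemma pinner_single (u v : X) i : (forall j, j <> i -> v j = hzero) -> hinner u v = hinner (u i) (v i).
Proof.
  intros Hv. simpl. unfold pinner. apply (sumI_single m (fun j => hinner (u j) (v j))).
  intros j Hj. rewrite Hv; auto. apply hinner_0r.
Qed.

Lemma weak_comp (u : nat -> X) (w : X) i : weak_cv u w -> weak_cv (fun n => u n i) (w i).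
Proof.
  intros Hw vi. set (V := (upd (fun j => hzero) i vi : X)).
  assert (HV : forall j, j <> i -> V j = hzero) by (intros; unfold V; rewrite upd_other; auto).
  specialize (Hw V). rewrite (pinner_single w V i HV) in Hw.
  assert (E : V i = vi) by (unfold V; apply upd_same). rewrite E in Hw.
  eapply Un_cv_ext; [|exact Hw]. intros n. cbv beta. rewrite (pinner_single (u n) V i HV), E. reflexivity.
Qed.

Lemma hnorm_le_sumI (v : X) : hnorm v <= sumI m (fun i => hnorm (v i)).
Proof.
  apply hnorm_le_of. apply sumI_nonneg; intros; apply hnorm_nonneg.
  simpl. unfold pinner, sumI.
  eapply Rle_trans; [|apply sum_lt_sq_le].
  - right. apply sum_lt_ext. intros k _. destruct (lt_dec k m). rewrite hnorm_sq. auto. ring.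
  - intros k. destruct (lt_dec k m). apply hnorm_nonneg. lra.
Qed.

Lemma summ_sumI (G : idx m -> nat -> R) : (forall i, summ (G i)) -> summ (fun n => sumI m (fun i => G i n)).
Proof.
  intros HG. unfold sumI.
  apply (summ_sum_lt (fun k n => match lt_dec k m with left h => G (exist _ k h) n | right _ => 0 end)).
  intros j. destruct (lt_dec j m). apply HG. apply summ_zero.
Qed.
End PS.


Ltac hsym2 a b := try rewrite ?(hinner_sym _ b a).
Ltac hsym_list l := match l with
  | nil => idtac
  | cons ?a ?r => let rec go r := match r with nil => idtac | cons ?b ?r' => hsym2 a b; go r' end in go r; hsym_list r
  end.

Section Main.
Variables (m : nat) (Hm : (2 <= m)%nat) (H : idx m -> Hilbert)
  (C : PH H -> Prop) (HCne : nonempty C) (HCcl : closed C) (HCcv : convex C)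
  (g : forall i : idx m, PH H -> R)
  (grad : forall i : idx m, PH H -> H i).
Hypothesis (Hdiff : forall (i : idx m) (x : PH H) (eps : R), eps > 0 ->
     exists delta, delta > 0 /\ forall h : H i, hnorm h < delta ->
       Rabs (g i (upd x i (hadd (x i) h)) - g i x - hinner (grad i x) h)
         <= eps * hnorm h).
Hypothesis (Hmono : forall x y : PH H,
     sumI m (fun i => hinner (hsub (grad i x) (grad i y)) (hsub (x i) (y i))) >= 0).
Variables (P : PH H -> PH H) (HP : is_proj C P).
Variables (chi : R) (Hchi : 0 < chi).
Hypothesis (HLip : forall x y : PH H,
     sumI m (fun i => hnorm (hsub (grad i x) (grad i y)) ^ 2)
       <= chi ^ 2 * sumI m (fun i => hnorm (hsub (x i) (y i)) ^ 2)).

Let X := PX m H.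
Definition B (u : X) : X := fun i => grad i u.
Definition PP (v : X) : X := P v.
Definition Zs (w : X) := C w /\ forall c : X, C c -> hinner (hsub c w) (hopp (B w)) <= 0.

Lemma HCcl' : hclosed X C.
Proof. exact HCcl. Qed.
Lemma HCcv' : hconvex X C.
Proof. intros u v t Hu Hv Ht. exact (HCcv u v t Hu Hv Ht). Qed.

Lemma PVI (v : X) : C (PP v) /\ forall c : X, C c -> hinner (hsub v (PP v)) (hsub c (PP v)) <= 0.
Proof.
  destruct (HP v) as [H1 H2]. split; auto. apply min_VI; auto.
Qed.

Lemma Pnonexp (y1 y2 : X) : hnorm (hsub (PP y1) (PP y2)) <= hnorm (hsub y1 y2).
Proof.
  destruct (PVI y1) as [C1 V1]; destruct (PVI y2) as [C2 V2].
  specialize (V1 _ C2); specialize (V2 _ C1).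
  assert (E : hinner (hsub (PP y1) (PP y2)) (hsub (PP y1) (PP y2)) <= hinner (hsub y1 y2) (hsub (PP y1) (PP y2))).
  { revert V1 V2. hexp. hsym_list (cons y1 (cons y2 (cons (PP y1) (cons (PP y2) nil)))). intros. lra. }
  assert (CS' := CS1 X (hsub y1 y2) (hsub (PP y1) (PP y2))).
  rewrite <- hnorm_sq in E.
  pose proof (hnorm_nonneg X (hsub (PP y1) (PP y2))). pose proof (hnorm_nonneg X (hsub y1 y2)). nra.
Qed.

Lemma Bmono (u v : X) : hinner (hsub (B u) (B v)) (hsub u v) >= 0.
Proof. exact (Hmono u v). Qed.

Lemma Blip (u v : X) : hnorm (hsub (B u) (B v)) <= chi * hnorm (hsub u v).
Proof.
  apply hnorm_le_of. pose proof (hnorm_nonneg X (hsub u v)). nra.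
  assert (L := HLip u v).
  replace (chi * hnorm (hsub u v) * (chi * hnorm (hsub u v))) with (chi ^ 2 * (hnorm (hsub u v) * hnorm (hsub u v))) by ring.
  rewrite hnorm_sq.
  change (hinner (hsub (B u) (B v)) (hsub (B u) (B v))) with (sumI m (fun i => hinner (hsub (grad i u) (grad i v)) (hsub (grad i u) (grad i v)))).
  change (hinner (hsub u v) (hsub u v)) with (sumI m (fun i => hinner (hsub (u i) (v i)) (hsub (u i) (v i)))).
  rewrite (sumI_ext m (fun i => hinner (hsub (grad i u) (grad i v)) (hsub (grad i u) (grad i v))) (fun i => hnorm (hsub (grad i u) (grad i v)) ^ 2)) by (intros; rewrite hnorm_sq2; auto).
  rewrite (sumI_ext m (fun i => hinner (hsub (u i) (v i)) (hsub (u i) (v i))) (fun i => hnorm (hsub (u i) (v i)) ^ 2)) by (intros; rewrite hnorm_sq2; auto).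
  exact L.
Qed.

Lemma fejer_step (x0 : X) gam z : 0 <= gam -> Zs z ->
  let q := PP (hsub x0 (hscal gam (B x0))) in
  hinner (hsub (hsub q (hscal gam (hsub (B q) (B x0)))) z) (hsub (hsub q (hscal gam (hsub (B q) (B x0)))) z)
  <= hinner (hsub x0 z) (hsub x0 z) - (1 - gam * gam * (chi * chi)) * hinner (hsub x0 q) (hsub x0 q).
Proof.
  intros Hg [Cz Hz] q.
  destruct (PVI (hsub x0 (hscal gam (B x0)))) as [Cq VI]. fold q in Cq, VI.
  specialize (VI z Cz). specialize (Hz q Cq).
  assert (Mo := Bmono q z).
  assert (Li := Blip q x0).
  assert (Li2 : hinner (hsub (B q) (B x0)) (hsub (B q) (B x0)) <= chi * chi * hinner (hsub q x0) (hsub q x0)).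
  { rewrite <- !hnorm_sq. pose proof (hnorm_nonneg X (hsub (B q) (B x0))). nra. }
  assert (M' : 0 <= gam * hinner (hsub (B q) (B z)) (hsub q z)) by (apply Rmult_le_pos; lra).
  assert (Z' : gam * hinner (hsub q z) (hopp (B z)) <= 0).
  { replace 0 with (gam * 0) by ring. apply Rmult_le_compat_l; lra. }
  assert (L' : gam * gam * hinner (hsub (B q) (B x0)) (hsub (B q) (B x0)) <= gam * gam * (chi * chi * hinner (hsub q x0) (hsub q x0))).
  { apply Rmult_le_compat_l; auto. nra. }
  clear Mo Li Li2 Hz. revert VI M' Z' L'. hexp.
  hsym_list (cons x0 (cons z (cons q (cons (B x0) (cons (B q) (cons (B z) nil)))))).
  intros. nra.
Qed.

Variables (eps : R) (Heps : 0 < eps < 1 / (chi + 1))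
  (gamma : nat -> R) (Hgamma : forall n, eps <= gamma n <= (1 - eps) / chi)
  (x0 : PH H) (a b c : forall i : idx m, nat -> H i)
  (Ha : forall i, abs_summable (a i)) (Hb : forall i, abs_summable (b i)) (Hc : forall i, abs_summable (c i))
  (x y p q : nat -> PH H)
  (Hx0 : forall i, x O i = x0 i)
  (Hy : forall n i, y n i = hsub (x n i) (hscal (gamma n) (hadd (grad i (x n)) (a i n))))
  (Hp : forall n i, p n i = hadd (P (y n) i) (b i n))
  (Hq : forall n i, q n i = hsub (p n i) (hscal (gamma n) (hadd (grad i (p n)) (c i n))))
  (Hx : forall n i, x (S n) i = hadd (hsub (x n i) (y n i)) (q n i)).

Definition xs n : X := x n.
Definition ys n : X := y n.
Definition ps n : X := p n.
Definition qs n : X := q n.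
Definition Ea n : X := fun i => a i n.
Definition Eb n : X := fun i => b i n.
Definition Ec n : X := fun i => c i n.
Definition yt n : X := hsub (xs n) (hscal (gamma n) (B (xs n))).
Definition pt n : X := PP (yt n).
Definition T n : X := hsub (pt n) (hscal (gamma n) (hsub (B (pt n)) (B (xs n)))).

Lemma Eys n : ys n = hsub (xs n) (hscal (gamma n) (hadd (B (xs n)) (Ea n))).
Proof. apply functional_extensionality_dep; intro i. apply Hy. Qed.
Lemma Eps n : ps n = hadd (PP (ys n)) (Eb n).
Proof. apply functional_extensionality_dep; intro i. apply Hp. Qed.
Lemma Eqs n : qs n = hsub (ps n) (hscal (gamma n) (hadd (B (ps n)) (Ec n))).
Proof. apply functional_extensionality_dep; intro i. apply Hq. Qed.
Lemma Exs n : xs (S n) = hadd (hsub (xs n) (ys n)) (qs n).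
Proof. apply functional_extensionality_dep; intro i. apply Hx. Qed.

Lemma eps_lt1 : eps < 1.
Proof.
  destruct Heps as [H1 H2]. assert (1 / (chi + 1) < 1).
  { apply (Rmult_lt_reg_r (chi + 1)). lra. unfold Rdiv. rewrite Rmult_assoc, Rinv_l by lra. lra. }
  lra.
Qed.

Lemma gam_pos n : 0 < gamma n.
Proof. destruct (Hgamma n); lra. Qed.
Lemma gam_chi n : gamma n * chi <= 1 - eps.
Proof.
  destruct (Hgamma n) as [_ H2]. apply (Rmult_le_compat_r chi) in H2; [|lra].
  replace ((1 - eps) / chi * chi) with (1 - eps) in H2 by (field; lra). auto.
Qed.

Definition Gm := (1 - eps) / chi.
Lemma gam_le n : gamma n <= Gm.
Proof. apply Hgamma. Qed.
Lemma Gm_pos : 0 < Gm.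
Proof. unfold Gm. apply Rdiv_lt_0_compat; auto. pose proof eps_lt1; lra. Qed.

Lemma err1 n : hnorm (hsub (ps n) (pt n)) <= gamma n * hnorm (Ea n) + hnorm (Eb n).
Proof.
  replace (hsub (ps n) (pt n)) with (hadd (hsub (PP (ys n)) (pt n)) (Eb n)).
  2: { rewrite Eps. apply hext; intro t. hexp. ring. }
  eapply Rle_trans; [apply tri|]. apply Rplus_le_compat_r.
  eapply Rle_trans; [apply Pnonexp|].
  replace (hsub (ys n) (yt n)) with (hopp (hscal (gamma n) (Ea n))).
  2: { rewrite Eys. unfold yt. apply hext; intro t. hexp. ring. }
  rewrite hnorm_opp, hnorm_scal, Rabs_right. lra. pose proof (gam_pos n); lra.
Qed.

Lemma err2 n : hnorm (hsub (xs (S n)) (T n)) <= gamma n * hnorm (Ea n) + (1 + gamma n * chi) * hnorm (hsub (ps n) (pt n)) + gamma n * hnorm (Ec n).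
Proof.
  replace (hsub (xs (S n)) (T n)) with
    (hadd (hadd (hscal (gamma n) (Ea n)) (hsub (ps n) (pt n))) (hopp (hadd (hscal (gamma n) (hsub (B (ps n)) (B (pt n)))) (hscal (gamma n) (Ec n))))).
  2: { rewrite Exs, Eqs, Eys. unfold T. apply hext; intro t. hexp. ring. }
  pose proof (gam_pos n) as Hg.
  eapply Rle_trans; [apply tri|]. rewrite hnorm_opp.
  assert (A1 := tri X (hscal (gamma n) (Ea n)) (hsub (ps n) (pt n))).
  assert (A2 := tri X (hscal (gamma n) (hsub (B (ps n)) (B (pt n)))) (hscal (gamma n) (Ec n))).
  rewrite !hnorm_scal, !Rabs_right in * by lra.
  assert (A3 := Blip (ps n) (pt n)).
  assert (gamma n * hnorm (hsub (B (ps n)) (B (pt n))) <= gamma n * (chi * hnorm (hsub (ps n) (pt n)))) by (apply Rmult_le_compat_l; lra).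
  nra.
Qed.

Definition sn n := hnorm (Ea n) + hnorm (Eb n) + hnorm (Ec n).
Definition Kc := Gm + (1 + Gm * chi) * (Gm + 1) + Gm.

Lemma sn_nonneg n : 0 <= sn n.
Proof. unfold sn. pose proof (hnorm_nonneg X (Ea n)); pose proof (hnorm_nonneg X (Eb n)); pose proof (hnorm_nonneg X (Ec n)). lra. Qed.

Lemma Kc_pos : 0 < Kc.
Proof. unfold Kc. pose proof Gm_pos. assert (0 <= Gm * chi) by nra. nra. Qed.

Lemma err1' n : hnorm (hsub (ps n) (pt n)) <= Kc * sn n.
Proof.
  eapply Rle_trans; [apply err1|]. unfold Kc, sn.
  pose proof (gam_le n); pose proof (gam_pos n); pose proof Gm_pos.
  pose proof (hnorm_nonneg X (Ea n)); pose proof (hnorm_nonneg X (Eb n)); pose proof (hnorm_nonneg X (Ec n)).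
  assert (0 <= Gm * chi) by nra.
  assert (gamma n * hnorm (Ea n) <= Gm * hnorm (Ea n)) by nra.
  assert (Gm * hnorm (Ea n) + hnorm (Eb n) <= (Gm + 1) * (hnorm (Ea n) + hnorm (Eb n) + hnorm (Ec n))) by nra.
  assert ((Gm + 1) * (hnorm (Ea n) + hnorm (Eb n) + hnorm (Ec n)) <= (Gm + (1 + Gm * chi) * (Gm + 1) + Gm) * (hnorm (Ea n) + hnorm (Eb n) + hnorm (Ec n))).
  { apply Rmult_le_compat_r. lra. nra. }
  lra.
Qed.

Lemma err2' n : hnorm (hsub (xs (S n)) (T n)) <= Kc * sn n.
Proof.
  eapply Rle_trans; [apply err2|]. 
  pose proof (err1 n) as E1.
  unfold Kc, sn in *.
  pose proof (gam_le n); pose proof (gam_pos n); pose proof Gm_pos.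
  pose proof (hnorm_nonneg X (Ea n)); pose proof (hnorm_nonneg X (Eb n)); pose proof (hnorm_nonneg X (Ec n)).
  pose proof (hnorm_nonneg X (hsub (ps n) (pt n))).
  set (A := hnorm (Ea n)) in *. set (Bb := hnorm (Eb n)) in *. set (Cc := hnorm (Ec n)) in *.
  set (D := hnorm (hsub (ps n) (pt n))) in *.
  assert (0 <= Gm * chi) by nra.
  assert (gamma n * chi <= Gm * chi) by nra.
  assert (D <= Gm * A + Bb) by nra.
  assert ((1 + gamma n * chi) * D <= (1 + Gm * chi) * (Gm * A + Bb)).
  { apply Rmult_le_compat; nra. }
  assert (gamma n * A <= Gm * A) by nra. assert (gamma n * Cc <= Gm * Cc) by nra.
  assert ((1 + Gm * chi) * (Gm * A + Bb) <= (1 + Gm * chi) * (Gm + 1) * (A + Bb + Cc)).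
  { rewrite Rmult_assoc. apply Rmult_le_compat_l. nra. nra. }
  nra.
Qed.

Lemma summ_sn : summ sn.
Proof.
  apply (summ_le sn (fun n => sumI m (fun i => hnorm (a i n)) + sumI m (fun i => hnorm (b i n)) + sumI m (fun i => hnorm (c i n)))).
  - intros n. split. apply sn_nonneg. unfold sn.
    pose proof (hnorm_le_sumI m H (Ea n) : hnorm (Ea n) <= sumI m (fun i => hnorm (a i n))).
    pose proof (hnorm_le_sumI m H (Eb n) : hnorm (Eb n) <= sumI m (fun i => hnorm (b i n))).
    pose proof (hnorm_le_sumI m H (Ec n) : hnorm (Ec n) <= sumI m (fun i => hnorm (c i n))).
    lra.
  - apply summ_plus; [apply summ_plus|]; apply summ_sumI; intros i; [apply Ha|apply Hb|apply Hc].
Qed.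

Lemma Ksn_cv : Un_cv (fun n => Kc * sn n) 0.
Proof. replace 0 with (Kc * 0) by ring. apply Un_cv_scal. apply summ_term0, summ_sn. Qed.


Hypothesis (Hz : exists z : PH H, normal_cone C z (fun i => hopp (grad i z))).

Lemma cv_close (u v e : nat -> R) l : Un_cv u l -> Un_cv e 0 -> (forall n, Rabs (v n - u n) <= e n) -> Un_cv v l.
Proof.
  intros Hu He Hv ep Hep. destruct (Hu (ep/2)) as [N1 H1]. lra. destruct (He (ep/2)) as [N2 H2]. lra.
  exists (max N1 N2). intros n Hn. specialize (H1 n ltac:(lia)). specialize (H2 n ltac:(lia)). specialize (Hv n).
  unfold R_dist in *. rewrite Rminus_0_r in H2.
  pose proof (Rle_abs (e n)). 
  replace (v n - l) with ((v n - u n) + (u n - l)) by ring.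
  eapply Rle_lt_trans. apply Rabs_triang. lra.
Qed.

Definition del0 := 1 - (1 - eps) * (1 - eps).
Lemma del0_pos : 0 < del0.
Proof. unfold del0. pose proof eps_lt1. destruct Heps. nra. Qed.

Lemma fejer_n z n : Zs z ->
  hinner (hsub (T n) z) (hsub (T n) z) <= hinner (hsub (xs n) z) (hsub (xs n) z) - del0 * hinner (hsub (xs n) (pt n)) (hsub (xs n) (pt n)).
Proof.
  intros Hzz.
  assert (F : hinner (hsub (T n) z) (hsub (T n) z) <= hinner (hsub (xs n) z) (hsub (xs n) z) - (1 - gamma n * gamma n * (chi * chi)) * hinner (hsub (xs n) (pt n)) (hsub (xs n) (pt n))).
  { exact (fejer_step (xs n) (gamma n) z ltac:(pose proof (gam_pos n); lra) Hzz). }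
  pose proof (hinner_pos X (hsub (xs n) (pt n))).
  pose proof (gam_chi n). pose proof (gam_pos n). pose proof eps_lt1.
  assert (0 <= gamma n * chi) by nra.
  assert (gamma n * gamma n * (chi * chi) <= (1 - eps) * (1 - eps)) by nra.
  unfold del0. nra.
Qed.

Lemma T_le z n : Zs z -> hnorm (hsub (T n) z) <= hnorm (hsub (xs n) z).
Proof.
  intros Hzz. apply hnorm_le_of. apply hnorm_nonneg. rewrite hnorm_sq.
  pose proof (fejer_n z n Hzz). pose proof (hinner_pos X (hsub (xs n) (pt n))). pose proof del0_pos. nra.
Qed.

Lemma dist_cv z : Zs z -> exists L, Un_cv (fun n => hnorm (hsub (xs n) z)) L.
Proof.
  intros Hzz. apply (quasi_fejer _ (fun n => Kc * sn n)).
  - intros; apply hnorm_nonneg.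
  - intros; pose proof Kc_pos; pose proof (sn_nonneg n); nra.
  - apply summ_scal, summ_sn.
  - intros n. eapply Rle_trans. apply (tri_sub X (xs (S n)) (T n) z).
    pose proof (err2' n). pose proof (T_le z n Hzz). lra.
Qed.

Lemma T_cv z L : Zs z -> Un_cv (fun n => hnorm (hsub (xs n) z)) L -> Un_cv (fun n => hnorm (hsub (T n) z)) L.
Proof.
  intros Hzz HL. apply (cv_close (fun n => hnorm (hsub (xs (S n)) z)) _ (fun n => Kc * sn n)).
  - apply (Un_cv_tail _ _ L O HL). intros n _. exists (S n); split; auto.
  - apply Ksn_cv.
  - intros n. pose proof (err2' n). pose proof (tri_sub X (xs (S n)) (T n) z). pose proof (tri_sub X (T n) (xs (S n)) z).
    rewrite (hnorm_sub_sym X (T n) (xs (S n))) in H2. apply Rabs_le. lra.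
Qed.

Lemma Zs_z : exists z, Zs z.
Proof. destruct Hz as [z Hz']. exists z. exact Hz'. Qed.

Lemma d_cv : Un_cv (fun n => hnorm (hsub (xs n) (pt n))) 0.
Proof.
  destruct Zs_z as [z Hzz]. destruct (dist_cv z Hzz) as [L HL]. assert (HT := T_cv z L Hzz HL).
  apply sq_cv0. intros; apply hnorm_nonneg.
  apply (squeeze0 _ (fun n => / del0 * (hnorm (hsub (xs n) z) * hnorm (hsub (xs n) z) - hnorm (hsub (T n) z) * hnorm (hsub (T n) z)))).
  - intros n. pose proof (hnorm_nonneg X (hsub (xs n) (pt n))). split. nra.
    pose proof (fejer_n z n Hzz). rewrite <- !hnorm_sq in H1. pose proof del0_pos.
    apply (Rmult_le_reg_l del0). auto. rewrite <- (Rmult_assoc del0 (/ del0)), Rinv_r by lra. rewrite Rmult_1_l. lra.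
  - replace 0 with (/ del0 * (L * L - L * L)) by ring. apply Un_cv_scal. apply CV_minus; apply CV_mult; auto.
Qed.

Lemma xp_cv : Un_cv (fun n => hnorm (hsub (xs n) (ps n))) 0.
Proof.
  apply (squeeze0 _ (fun n => hnorm (hsub (xs n) (pt n)) + Kc * sn n)).
  - intros n. split. apply hnorm_nonneg. eapply Rle_trans. apply (tri_sub X (xs n) (pt n) (ps n)).
    rewrite (hnorm_sub_sym X (pt n)). pose proof (err1' n). lra.
  - replace 0 with (0 + 0) by ring. apply CV_plus. apply d_cv. apply Ksn_cv.
Qed.


Lemma hsub0 (u v : X) : hinner (hsub u v) (hsub u v) = 0 -> u = v.
Proof.
  intros E. apply hinner_def in E. apply hext; intro t.
  assert (E2 : hinner (hsub u v) t = 0) by (rewrite E; apply hinner_0l).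
  revert E2. hexp. intros. lra.
Qed.

Lemma real_pos_small a0 K : (forall t, 0 < t <= 1 -> - (t * K) <= a0) -> 0 <= a0.
Proof.
  intros Ht. destruct (Rle_dec 0 a0) as [|Hn]; auto. exfalso.
  destruct (Rle_dec K 0). specialize (Ht 1 ltac:(lra)). lra.
  set (t := Rmin 1 (- a0 / (2 * K))).
  assert (0 < - a0 / (2 * K)) by (apply Rdiv_lt_0_compat; lra).
  assert (Ht1 : 0 < t <= 1) by (unfold t; split; [apply Rmin_glb_lt; lra|apply Rmin_l]).
  specialize (Ht t Ht1).
  assert (t <= - a0 / (2 * K)) by apply Rmin_r.
  assert (A1 : t * K <= - a0 / (2 * K) * K) by (apply Rmult_le_compat_r; lra).
  replace (- a0 / (2 * K) * K) with (- a0 / 2) in A1 by (field; lra). lra.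
Qed.

Lemma xs_bounded : exists K, forall n, hnorm (xs n) <= K.
Proof.
  destruct Zs_z as [z Hzz]. destruct (dist_cv z Hzz) as [L HL]. destruct (cv_bounded _ _ HL) as [K HK].
  exists (K + hnorm z). intros n. pose proof (hnorm_rev_tri X (xs n) z). specialize (HK n). lra.
Qed.

Lemma weak_shift (u v : nat -> X) w : weak_cv u w -> Un_cv (fun n => hnorm (hsub (u n) (v n))) 0 -> weak_cv v w.
Proof.
  intros Hw Hd t. apply (cv_close (fun n => hinner (u n) t) _ (fun n => hnorm (hsub (u n) (v n)) * hnorm t)).
  - apply Hw.
  - replace 0 with (0 * hnorm t) by ring. apply CV_mult; auto. apply Un_cv_const.
  - intros n. replace (hinner (v n) t - hinner (u n) t) with (- hinner (hsub (u n) (v n)) t) by (hexp; ring).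
    rewrite Rabs_Ropp. apply CS.
Qed.

Lemma minty_step (c0 : X) k : C c0 ->
  - ((1 / eps + chi) * hnorm (hsub (xs k) (pt k)) * hnorm (hsub c0 (pt k))) <= hinner (B c0) (hsub c0 (pt k)).
Proof.
  intros Cc0. set (qq := pt k). set (xk := xs k). set (gm := gamma k).
  destruct (PVI (yt k)) as [Cq VI]. fold (pt k) in Cq, VI. fold qq in Cq, VI. specialize (VI c0 Cc0).
  unfold yt in VI. fold xk gm in VI.
  assert (Mo := Bmono c0 qq).
  assert (C1 := CS2 X (hsub xk qq) (hsub c0 qq)).
  assert (C2 := CS2 X (hsub (B qq) (B xk)) (hsub c0 qq)).
  assert (Li := Blip qq xk). rewrite (hnorm_sub_sym X qq xk) in Li.
  pose proof (hnorm_nonneg X (hsub xk qq)). pose proof (hnorm_nonneg X (hsub c0 qq)).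
  pose proof (hnorm_nonneg X (hsub (B qq) (B xk))).
  set (D := hnorm (hsub xk qq)) in *. set (R := hnorm (hsub c0 qq)) in *.
  assert (Hg : eps <= gm) by apply Hgamma.
  assert (Hg0 : 0 < gm) by (destruct Heps; lra).
  assert (Mo' : 0 <= gm * hinner (hsub (B c0) (B qq)) (hsub c0 qq)) by (apply Rmult_le_pos; lra).
  assert (C2' : - (gm * (chi * D * R)) <= gm * hinner (hsub (B qq) (B xk)) (hsub c0 qq)).
  { assert (hnorm (hsub (B qq) (B xk)) * R <= chi * D * R) by (apply Rmult_le_compat_r; lra).
    replace (- (gm * (chi * D * R))) with (gm * (- (chi * D * R))) by ring.
    apply Rmult_le_compat_l; lra. }
  assert (Key : - (D * R) - gm * (chi * D * R) <= gm * hinner (B c0) (hsub c0 qq)).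
  { clear Mo Li C2. revert VI C1 Mo' C2'. hexp. intros. lra. }
  set (Xv := hinner (B c0) (hsub c0 qq)) in *.
  assert (0 <= D * R) by nra.
  assert (HDR : D * R / gm <= D * R / eps).
  { unfold Rdiv. apply Rmult_le_compat_l; auto. apply Rinv_le_contravar; lra. }
  assert (- (D * R / gm) - chi * D * R <= Xv).
  { apply (Rmult_le_reg_l gm); auto. replace (gm * (- (D * R / gm) - chi * D * R)) with (- (D * R) - gm * (chi * D * R)) by (field; lra). lra. }
  replace ((1 / eps + chi) * D * R) with (D * R / eps + chi * D * R) by (field; destruct Heps; lra). lra.
Qed.

Lemma demi phi w : inc phi -> weak_cv (fun n => xs (phi n)) w -> Zs w.
Proof.
  intros Hphi Hw.
  assert (Hpt : weak_cv (fun n => pt (phi n)) w).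
  { apply (weak_shift _ _ _ Hw). apply (Un_cv_sub (fun n => hnorm (hsub (xs n) (pt n)))); auto. apply d_cv. }
  assert (Cw : C w).
  { destruct (PVI w) as [Cpi VI]. set (pi := PP w) in *.
    assert (L : hinner w (hsub w pi) <= hinner pi (hsub w pi)).
    { apply (Un_cv_le (fun n => hinner (pt (phi n)) (hsub w pi))). apply Hpt.
      intros n. destruct (PVI (yt (phi n))) as [Cq _]. specialize (VI _ Cq). fold (pt (phi n)) in VI.
      revert VI. hexp. hsym_list (cons w (cons pi (cons (pt (phi n)) nil))). intros. lra. }
    assert (E : hinner (hsub w pi) (hsub w pi) = 0).
    { apply Rle_antisym. revert L. hexp. hsym_list (cons w (cons pi nil)). intros. lra. apply hinner_pos. }
    apply hsub0 in E. rewrite E. auto. }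
  assert (Minty : forall c0 : X, C c0 -> 0 <= hinner (B c0) (hsub c0 w)).
  { intros c0 Cc0.
    destruct xs_bounded as [K HK].
    destruct (cv_bounded _ _ d_cv) as [Kd HKd].
    set (Rb := hnorm c0 + K + Kd).
    assert (HR : forall k, hnorm (hsub c0 (pt k)) <= Rb).
    { intros k. pose proof (tri_sub X c0 hzero (pt k)). pose proof (tri_sub X hzero (xs k) (pt k)).
      replace (hsub c0 hzero) with c0 in H0 by (apply hext; intro; hexp; ring).
      rewrite (hnorm_sub_sym X hzero (xs k)) in H1.
      replace (hsub (xs k) hzero) with (xs k) in H1 by (apply hext; intro; hexp; ring).
      specialize (HK k); specialize (HKd k). unfold Rb. lra. }
    set (kap := (1 / eps + chi) * Rb).
    assert (Hkap : 0 <= kap).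
    { unfold kap. apply Rmult_le_pos. destruct Heps. assert (0 < 1/eps) by (apply Rdiv_lt_0_compat; lra). lra.
      pose proof (HR O). pose proof (hnorm_nonneg X (hsub c0 (pt O))). lra. }
    replace (hinner (B c0) (hsub c0 w)) with (hinner (B c0) (hsub c0 w) + kap * 0) by ring.
    apply (Un_cv_ge (fun n => hinner (B c0) (hsub c0 (pt (phi n))) + kap * hnorm (hsub (xs (phi n)) (pt (phi n))))).
    - apply CV_plus. 
      + replace (hinner (B c0) (hsub c0 w)) with (hinner (B c0) c0 - hinner w (B c0)) by (hexp; rewrite (hinner_sym _ w); ring).
        eapply Un_cv_ext; [|apply (CV_minus (fun _ => hinner (B c0) c0) (fun n => hinner (pt (phi n)) (B c0))); [apply Un_cv_const|apply Hpt]].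
        intros n. cbv beta. hexp. rewrite (hinner_sym _ (pt (phi n))). ring.
      + apply Un_cv_scal. apply (Un_cv_sub (fun n => hnorm (hsub (xs n) (pt n)))); auto. apply d_cv.
    - intros n. pose proof (minty_step c0 (phi n) Cc0). pose proof (HR (phi n)).
      pose proof (hnorm_nonneg X (hsub (xs (phi n)) (pt (phi n)))).
      assert ((1 / eps + chi) * hnorm (hsub (xs (phi n)) (pt (phi n))) * hnorm (hsub c0 (pt (phi n))) <= kap * hnorm (hsub (xs (phi n)) (pt (phi n)))).
      { unfold kap. assert (0 <= 1 / eps + chi). destruct Heps. assert (0 < 1/eps) by (apply Rdiv_lt_0_compat; lra). lra.
        replace ((1 / eps + chi) * Rb * hnorm (hsub (xs (phi n)) (pt (phi n)))) with ((1 / eps + chi) * hnorm (hsub (xs (phi n)) (pt (phi n))) * Rb) by ring.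
        apply Rmult_le_compat_l; auto. apply Rmult_le_pos; auto. }
      lra. }
  split; auto. intros c0 Cc0.
  assert (0 <= hinner (B w) (hsub c0 w)).
  { apply (real_pos_small _ (chi * hinner (hsub c0 w) (hsub c0 w))). intros t Ht.
    set (ct := hadd (hscal (1 - t) w) (hscal t c0)).
    assert (Cct : C ct) by (apply HCcv'; auto; lra).
    assert (M1 := Minty ct Cct).
    assert (E1 : hsub ct w = hscal t (hsub c0 w)) by (apply hext; intro; unfold ct; hexp; ring).
    rewrite E1, hinner_scalr in M1.
    assert (M2 : 0 <= hinner (B ct) (hsub c0 w)).
    { destruct (Rle_dec 0 (hinner (B ct) (hsub c0 w))); auto. nra. }
    assert (L1 := Blip ct w). rewrite E1, hnorm_scal, Rabs_right in L1 by lra.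
    assert (C3 := CS1 X (hsub (B ct) (B w)) (hsub c0 w)).
    pose proof (hnorm_nonneg X (hsub c0 w)). pose proof (hnorm_nonneg X (hsub (B ct) (B w))).
    assert (hnorm (hsub (B ct) (B w)) * hnorm (hsub c0 w) <= chi * (t * hnorm (hsub c0 w)) * hnorm (hsub c0 w)) by (apply Rmult_le_compat_r; lra).
    rewrite <- hnorm_sq.
    assert (E2 : hinner (B w) (hsub c0 w) = hinner (B ct) (hsub c0 w) - hinner (hsub (B ct) (B w)) (hsub c0 w)) by (hexp; ring).
    rewrite E2. nra. }
  rewrite hinner_oppr, hinner_sym. lra.
Qed.


Lemma uniq phi1 phi2 w1 w2 : Zs w1 -> Zs w2 -> inc phi1 -> inc phi2 ->
  weak_cv (fun n => xs (phi1 n)) w1 -> weak_cv (fun n => xs (phi2 n)) w2 -> w1 = w2.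
Proof.
  intros Z1 Z2 I1 I2 W1 W2.
  destruct (dist_cv w1 Z1) as [L1 HL1]. destruct (dist_cv w2 Z2) as [L2 HL2].
  set (l := (L2 * L2 - L1 * L1 - hinner w2 w2 + hinner w1 w1) / 2).
  assert (Hr : Un_cv (fun n => hinner (xs n) (hsub w1 w2)) l).
  { replace l with (/ 2 * ((L2 * L2 - L1 * L1) + (hinner w1 w1 - hinner w2 w2))) by (unfold l; field).
    eapply Un_cv_ext; [|apply Un_cv_scal; apply CV_plus;
      [apply CV_minus; apply CV_mult; [exact HL2|exact HL2|exact HL1|exact HL1]|apply (Un_cv_const (hinner w1 w1 - hinner w2 w2))]].
    intros n. cbv beta. rewrite !hnorm_sq. hexp. hsym_list (cons (xs n) (cons w1 (cons w2 nil))). field. }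
  assert (E1 : hinner w1 (hsub w1 w2) = l).
  { apply (UL_sequence (fun n => hinner (xs (phi1 n)) (hsub w1 w2))). apply W1. apply (Un_cv_sub (fun n => hinner (xs n) (hsub w1 w2))); auto. }
  assert (E2 : hinner w2 (hsub w1 w2) = l).
  { apply (UL_sequence (fun n => hinner (xs (phi2 n)) (hsub w1 w2))). apply W2. apply (Un_cv_sub (fun n => hinner (xs n) (hsub w1 w2))); auto. }
  apply hsub0. revert E1 E2. hexp. hsym_list (cons w1 (cons w2 nil)). intros. lra.
Qed.

Lemma x_weak : exists w, Zs w /\ weak_cv xs w.
Proof.
  destruct xs_bounded as [K HK].
  destruct (weak_compact X xs K HK) as [phi0 [I0 [w Hw]]].
  assert (Zw := demi phi0 w I0 Hw).
  exists w. split; auto. intros v. apply NNPP. intros Hn.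
  destruct (not_cv_sub _ _ Hn) as [eta [Heta [psi [Ipsi Hpsi]]]].
  destruct (weak_compact X (fun n => xs (psi n)) K (fun n => HK (psi n))) as [phi1 [I1 [w' Hw']]].
  assert (I2 : inc (fun n => psi (phi1 n))) by (apply inc_comp; auto).
  assert (Zw' := demi _ w' I2 Hw').
  assert (E := uniq _ _ _ _ Zw Zw' I0 I2 Hw Hw'). subst w'.
  destruct (Hw' v eta Heta) as [N HN]. specialize (HN N (le_n _)). specialize (Hpsi (phi1 N)).
  unfold R_dist in HN. lra.
Qed.

Lemma nash (w : X) : Zs w -> forall i : idx m,
  Qset C i w (w i) /\ forall t : H i, Qset C i w t -> g i (upd w i (w i)) <= g i (upd w i t).
Proof.
  intros [Cw Hw] i. unfold Qset. split. rewrite upd_id. auto.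
  intros t Ct.
  set (d := hsub t (w i)).
  assert (HVI : 0 <= hinner (grad i w) d).
  { assert (E : hinner (hopp (B w)) (hsub (upd w i t : X) w) = hinner (hopp (grad i w)) d).
    { etransitivity. apply (pinner_single m H _ _ i).
      - intros j Hj. change (hsub (upd w i t j) (w j) = hzero). rewrite upd_other; auto. apply hsub_diag.
      - change (hinner (hopp (grad i w)) (hsub (upd w i t i) (w i)) = hinner (hopp (grad i w)) d).
        rewrite upd_same. reflexivity. }
    specialize (Hw (upd w i t : X) Ct). rewrite hinner_sym, E, hinner_oppl in Hw. lra. }
  set (xsv := fun s => (upd w i (hadd (w i) (hscal s d)) : X)).
  set (phi := fun s => g i (xsv s)).
  set (phi' := fun s => hinner (grad i (xsv s)) d).
  assert (Hder : forall s, derivable_pt_lim phi s (phi' s)).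
  { intros s e He.
    set (nd := hnorm d). assert (Hnd : 0 <= nd) by apply hnorm_nonneg.
    destruct (Hdiff i (xsv s) (e / (2 * (nd + 1)))) as [dl [Hdl Hd]].
    { apply Rdiv_lt_0_compat; lra. }
    assert (Hdp : 0 < dl / (nd + 1)) by (apply Rdiv_lt_0_compat; lra).
    exists (mkposreal _ Hdp). intros h Hh0 Hh. simpl in Hh.
    specialize (Hd (hscal h d)).
    rewrite hnorm_scal in Hd. fold nd in Hd.
    assert (Hhn : Rabs h * nd < dl).
    { apply Rle_lt_trans with (Rabs h * (nd + 1)). apply Rmult_le_compat_l. apply Rabs_pos. lra.
      apply (Rmult_lt_reg_r (/ (nd + 1))). apply Rinv_0_lt_compat; lra.
      rewrite Rmult_assoc, Rinv_r, Rmult_1_r by lra. auto. }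
    specialize (Hd Hhn).
    assert (Eu : upd (xsv s) i (hadd (xsv s i) (hscal h d)) = xsv (s + h)).
    { unfold xsv. rewrite upd_upd, upd_same. f_equal. apply hext; intro z. hexp. ring. }
    rewrite Eu, hinner_scalr in Hd. fold (phi (s + h)) (phi s) (phi' s) in Hd.
    assert (Hh0' : 0 < Rabs h) by (apply Rabs_pos_lt; auto).
    replace ((phi (s + h) - phi s) / h - phi' s) with ((phi (s + h) - phi s - h * phi' s) / h) by (field; auto).
    unfold Rdiv. rewrite Rabs_mult, Rabs_inv.
    apply (Rmult_lt_reg_r (Rabs h)); auto. rewrite Rmult_assoc, Rinv_l, Rmult_1_r by lra.
    eapply Rle_lt_trans; [exact Hd|].
    replace (e / (2 * (nd + 1)) * (Rabs h * nd)) with (Rabs h * (e * (nd / (2 * (nd + 1))))) by (field; lra).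
    rewrite Rmult_comm. apply Rmult_lt_compat_r; auto.
    assert (nd / (2 * (nd + 1)) < 1).
    { apply (Rmult_lt_reg_r (2 * (nd + 1))). lra. unfold Rdiv. rewrite Rmult_assoc, Rinv_l by lra. lra. }
    assert (0 <= nd / (2 * (nd + 1))) by (apply Rmult_le_pos; [lra|left; apply Rinv_0_lt_compat; lra]).
    nra. }
  destruct (MVT_cor2 phi phi' 0 1 ltac:(lra) (fun c _ => Hder c)) as [xi [Exi Hxi]].
  assert (X0 : xsv 0 = w).
  { unfold xsv. replace (hadd (w i) (hscal 0 d)) with (w i). apply upd_id. apply hext; intro z. hexp. ring. }
  assert (X1 : xsv 1 = upd w i t).
  { unfold xsv. f_equal. apply hext; intro z. unfold d. hexp. ring. }
  assert (Mxi : 0 <= xi * (phi' xi - phi' 0)).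
  { assert (Mo := Bmono (xsv xi) (xsv 0)).
    assert (E : hinner (hsub (B (xsv xi)) (B (xsv 0))) (hsub (xsv xi) (xsv 0)) =
                hinner (hsub (grad i (xsv xi)) (grad i (xsv 0))) (hsub (hadd (w i) (hscal xi d)) (hadd (w i) (hscal 0 d)))).
    { etransitivity. apply (pinner_single m H _ _ i).
      - intros j Hj. change (hsub (xsv xi j) (xsv 0 j) = hzero). unfold xsv. rewrite !upd_other; auto. apply hsub_diag.
      - change (hinner (hsub (grad i (xsv xi)) (grad i (xsv 0))) (hsub (xsv xi i) (xsv 0 i)) = hinner (hsub (grad i (xsv xi)) (grad i (xsv 0))) (hsub (hadd (w i) (hscal xi d)) (hadd (w i) (hscal 0 d)))).
        unfold xsv at 3 4. rewrite !upd_same. reflexivity. }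
    rewrite E in Mo. unfold phi'. revert Mo. hexp. intros. lra. }
  assert (phi' 0 <= phi' xi) by (apply (Rmult_le_reg_l xi); lra).
  assert (phi' 0 = hinner (grad i w) d) by (unfold phi'; rewrite X0; auto).
  rewrite upd_id. rewrite <- X1. rewrite <- X0 at 1.
  change (phi 0 <= phi 1). nra.
Qed.

Theorem main_concl : exists xbar : PH H,
    (forall i : idx m,
       Qset C i xbar (xbar i) /\
       forall t : H i, Qset C i xbar t -> g i (upd xbar i (xbar i)) <= g i (upd xbar i t)) /\
    (forall i : idx m, weak_cv (fun n => x n i) (xbar i) /\ weak_cv (fun n => p n i) (xbar i)).
Proof.
  destruct x_weak as [w [Zw Hw]].
  exists w. split.
  - apply nash; auto.
  - intros i. split.
    + exact (weak_comp m H xs w i Hw).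
    + apply (weak_comp m H ps w i). apply (weak_shift xs ps w Hw xp_cv).
Qed.

End Main.

Theorem proposition4p5
  (m : nat) (Hm : (2 <= m)%nat)
  (H : idx m -> Hilbert)
  (C : PH H -> Prop) (HCne : nonempty C) (HCcl : closed C) (HCcv : convex C)
  (g : forall i : idx m, PH H -> R)
  (grad : forall i : idx m, PH H -> H i)
  (* for every x, t |-> g_i(x_1,..,t,..,x_m) is (Fréchet) differentiable at
     x_i with gradient grad_i x; since x ranges over all of PH, this is
     differentiability on all of H_i *)
  (Hdiff : forall (i : idx m) (x : PH H) (eps : R), eps > 0 ->
     exists delta, delta > 0 /\ forall h : H i, hnorm h < delta ->
       Rabs (g i (upd x i (hadd (x i) h)) - g i x - hinner (grad i x) h)
         <= eps * hnorm h)
  (Hmono : forall x y : PH H,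
     sumI m (fun i => hinner (hsub (grad i x) (grad i y)) (hsub (x i) (y i))) >= 0)
  (P : PH H -> PH H) (HP : is_proj C P)
  (Hz : exists z : PH H, normal_cone C z (fun i => hopp (grad i z)))
  (chi : R) (Hchi : 0 < chi)
  (HLip : forall x y : PH H,
     sumI m (fun i => hnorm (hsub (grad i x) (grad i y)) ^ 2)
       <= chi ^ 2 * sumI m (fun i => hnorm (hsub (x i) (y i)) ^ 2))
  (eps : R) (Heps : 0 < eps < 1 / (chi + 1))
  (gamma : nat -> R) (Hgamma : forall n, eps <= gamma n <= (1 - eps) / chi)
  (x0 : PH H)
  (a b c : forall i : idx m, nat -> H i)
  (Ha : forall i, abs_summable (a i))
  (Hb : forall i, abs_summable (b i))
  (Hc : forall i, abs_summable (c i))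
  (x y p q : nat -> PH H)
  (Hx0 : forall i, x O i = x0 i)
  (Hy : forall n i, y n i = hsub (x n i) (hscal (gamma n) (hadd (grad i (x n)) (a i n))))
  (Hp : forall n i, p n i = hadd (P (y n) i) (b i n))
  (Hq : forall n i, q n i = hsub (p n i) (hscal (gamma n) (hadd (grad i (p n)) (c i n))))
  (Hx : forall n i, x (S n) i = hadd (hsub (x n i) (y n i)) (q n i)) :
  exists xbar : PH H,
    (forall i : idx m,
       Qset C i xbar (xbar i) /\
       forall t : H i, Qset C i xbar t -> g i (upd xbar i (xbar i)) <= g i (upd xbar i t)) /\
    (forall i : idx m, weak_cv (fun n => x n i) (xbar i) /\ weak_cv (fun n => p n i) (xbar i)).
Proof.
  intros. eapply (main_concl m Hm H C HCcv g grad Hdiff Hmono P HP chi Hchi HLip eps Heps gamma Hgamma a b c); eassumption.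
Qed.
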